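(* Let $m$ be odd, $\Omega\subseteq\mathbb R^m$ open, and $f\in\mathcal C^4(\Omega;\mathbb R_{0,m})$. Suppose $f$ is harmonic in $\Omega$ (respectively, inframonogenic in $\Omega$). Then $f$ is also inframonogenic (respectively, harmonic) in $\Omega$ if and only if any one of the following holds: (i) $\partial_{\underline x}^3\big(f(\underline x)\underline x\big)=0$ in $\Omega$; (ii) $\big(\underline xf(\underline x)\big)\partial_{\underline x}^3=0$ in $\Omega$; (iii) $\Delta_{\underline x}^2\big(\underline xf(\underline x)\underline x\big)=0$ in $\Omega$.
   Context: $\mathbb R_{0,m}$ is the $2^m$-dimensional real Clifford algebra generated by the orthonormal basis $e_1,\dots,e_m$ of $\mathbb R^m$ with relations $e_je_k+e_ke_j=-2\delta_{jk}$. A point of $\mathbb R^m$ is identified with $\underline x=\sum_j x_je_j$. The Dirac operator $\partial_{\underline x}=\sum_j e_j\partial_{x_j}$ acts from the left, $\partial_{\underline x}f=\sum_j e_j\partial_{x_j}f$, or from the right, $f\partial_{\underline x}=\sum_j(\partial_{x_j}f)e_j$; powers denote iterated application on the same side. $f\in\mathcal C^2$ is inframonogenic if $\partial_{\underline x}f\partial_{\underline x}=\sum_{i,j}e_i(\partial_{x_i}\partial_{x_j}f)e_j=0$. $\Delta_{\underline x}=\sum_j\partial_{x_j}^2$. *)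

(* Defs.v *)
From Stdlib Require Import Reals ClassicalEpsilon.
From HB Require Import structures.
From mathcomp Require Import all_boot.
Set Implicit Arguments. Unset Strict Implicit. Unset Printing Implicit Defensive.

HB.instance Definition _ := Monoid.isComLaw.Build R R0 Rplus (fun a b c => esym (Rplus_assoc a b c)) Rplus_comm Rplus_0_l.

Local Open Scope R_scope.

Definition point (m : nat) := 'I_m -> R.

(* The Clifford algebra R_{0,m}: real coefficients on the basis blades
   e_A, A subset of {0..m-1} (e_A = e_{a1} ... e_{ak}, a1 < ... < ak). *)
Definition Cl (m : nat) := {set 'I_m} -> R.

Definition clzero (m : nat) (a : Cl m) : Prop := forall A, a A = 0.

Definition symdiff (m : nat) (A B : {set 'I_m}) : {set 'I_m} := (A :\: B) :|: (B :\: A).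

(* e_A e_B = (-1)^(#{(i,k): i in A, k in B, k < i} + |A cap B|) e_{A symdiff B},
   using e_i e_k = - e_k e_i (i <> k) and e_i^2 = -1. *)
Definition blade_sign (m : nat) (A B : {set 'I_m}) : R :=
  (-1) ^ (#|[set p : 'I_m * 'I_m | (p.1 \in A) && (p.2 \in B) && (p.2 < p.1)%N]|
          + #|A :&: B|)%N.

Definition clmul (m : nat) (a b : Cl m) : Cl m := fun C =>
  \big[Rplus/0]_(A : {set 'I_m}) (a A * b (symdiff A C) * blade_sign A (symdiff A C)).

Definition gen (m : nat) (j : 'I_m) : Cl m := fun C => if C == [set j] then 1 else 0.

Definition vec (m : nat) (x : point m) : Cl m := fun C =>
  \big[Rplus/0]_(j : 'I_m) (x j * gen j C).

Definition upd (m : nat) (x : point m) (j : 'I_m) (t : R) : point m :=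
  fun i => if i == j then t else x i.

(* Partial derivative d/dx_j, componentwise (the derivative when it exists;
   an unspecified value otherwise). *)
Definition pd (m : nat) (j : 'I_m) (f : point m -> Cl m) : point m -> Cl m :=
  fun x C => epsilon (inhabits 0)
    (fun l => derivable_pt_lim (fun t => f (upd x j t) C) (x j) l).

(* Iterated partial derivative: pds [:: j1; ...; jk] f = d_j1 (... (d_jk f)). *)
Fixpoint pds (m : nat) (l : seq 'I_m) (f : point m -> Cl m) : point m -> Cl m :=
  match l with
  | [::] => f
  | j :: l' => pd j (pds l' f)
  end.

Definition open_Rm (m : nat) (Om : point m -> Prop) : Prop :=
  forall x, Om x -> exists r, 0 < r /\
    forall y : point m, (forall i, Rabs (y i - x i) < r) -> Om y.

Definition cont_at_Rm (m : nat) (g : point m -> R) (x : point m) : Prop :=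
  forall eps, 0 < eps -> exists delta, 0 < delta /\
    forall y : point m, (forall i, Rabs (y i - x i) < delta) -> Rabs (g y - g x) < eps.

Definition Ck (m k : nat) (Om : point m -> Prop) (f : point m -> Cl m) : Prop :=
  (forall (l : seq 'I_m) (j : 'I_m) C x, (size l < k)%N -> Om x ->
     derivable_pt_lim (fun t => pds l f (upd x j t) C) (x j) (pds (j :: l) f x C))
  /\ (forall (l : seq 'I_m) C x, (size l <= k)%N -> Om x ->
     cont_at_Rm (fun y => pds l f y C) x).

Definition lap (m : nat) (f : point m -> Cl m) : point m -> Cl m := fun x C =>
  \big[Rplus/0]_(j : 'I_m) pd j (pd j f) x C.

Definition diracL (m : nat) (f : point m -> Cl m) : point m -> Cl m := fun x C =>
  \big[Rplus/0]_(j : 'I_m) clmul (gen j) (pd j f x) C.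
Definition diracR (m : nat) (f : point m -> Cl m) : point m -> Cl m := fun x C =>
  \big[Rplus/0]_(j : 'I_m) clmul (pd j f x) (gen j) C.

Definition harmonic (m : nat) (Om : point m -> Prop) (f : point m -> Cl m) : Prop :=
  forall x, Om x -> clzero (lap f x).

Definition inframonogenic (m : nat) (Om : point m -> Prop) (f : point m -> Cl m) : Prop :=
  forall x, Om x -> clzero (fun C =>
    \big[Rplus/0]_(i : 'I_m) \big[Rplus/0]_(j : 'I_m)
       clmul (clmul (gen i) (pd i (pd j f) x)) (gen j) C).

Definition f_x (m : nat) (f : point m -> Cl m) : point m -> Cl m :=
  fun x => clmul (f x) (vec x).
Definition x_f (m : nat) (f : point m -> Cl m) : point m -> Cl m :=
  fun x => clmul (vec x) (f x).
Definition x_f_x (m : nat) (f : point m -> Cl m) : point m -> Cl m :=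
  fun x => clmul (clmul (vec x) (f x)) (vec x).

Definition vanishes_on (m : nat) (Om : point m -> Prop) (g : point m -> Cl m) : Prop :=
  forall x, Om x -> clzero (g x).

Definition cond_i (m : nat) Om (f : point m -> Cl m) :=
  vanishes_on Om (diracL (diracL (diracL (f_x f)))).
Definition cond_ii (m : nat) Om (f : point m -> Cl m) :=
  vanishes_on Om (diracR (diracR (diracR (x_f f)))).
Definition cond_iii (m : nat) Om (f : point m -> Cl m) :=
  vanishes_on Om (lap (lap (x_f_x f))).

(* Main.v *)
Require Import Defs.
From Stdlib Require Import Reals.
From mathcomp Require Import all_boot.
From Stdlib Require Import Lra Lia ClassicalEpsilon FunctionalExtensionality PropExtensionality Classical.
From HB Require Import structures.
Set Implicit Arguments. Unset Strict Implicit. Unset Printing Implicit Defensive.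
Local Open Scope R_scope.

Section Cliff.
Variable m : nat.
Implicit Types (A B C D E : {set 'I_m}) (a b : Cl m) (i j k : 'I_m).

Definition par (S : {set 'I_m}) : R := (-1) ^ #|S|.

Lemma in_symdiff A B x : (x \in symdiff A B) = (x \in A) (+) (x \in B).
Proof. by rewrite /symdiff !inE; case: (x \in A); case: (x \in B). Qed.

Lemma card_symdiff A B : (#|symdiff A B| + 2 * #|A :&: B| = #|A| + #|B|)%N.
Proof.
have h1 := cardsID B A. have h2 := cardsID A B.
have h3 := cardsUI (A :\: B) (B :\: A).
have e : (A :\: B) :&: (B :\: A) = set0.
  apply/setP=> x; rewrite !inE; by case: (x \in A); case: (x \in B).
rewrite e cards0 addn0 in h3. rewrite /symdiff h3 -h1 -h2 (setIC B A).
set x := #|A :&: B|. set y := #|A :\: B|. set z := #|B :\: A|.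
rewrite -!plusE -multE. lia.
Qed.

Lemma par_symdiff A B : par (symdiff A B) = par A * par B.
Proof.
rewrite /par -pow_add plusE -card_symdiff -plusE pow_add -multE pow_mult.
have -> : (-1) ^ 2 = 1 by simpl; ring. by rewrite pow1 Rmult_1_r.
Qed.

Lemma par1 i : par [set i] = -1.
Proof. by rewrite /par cards1 /=; ring. Qed.
Lemma par0 : par set0 = 1.
Proof. by rewrite /par cards0. Qed.

Lemma symdiffA A B C : symdiff (symdiff A B) C = symdiff A (symdiff B C).
Proof. apply/setP=> x; rewrite !in_symdiff; by case: (x \in A); case: (x \in B); case: (x \in C). Qed.
Lemma symdiffC A B : symdiff A B = symdiff B A.
Proof. apply/setP=> x; rewrite !in_symdiff; by case: (x \in A); case: (x \in B). Qed.
Lemma symdiffvv A B : symdiff A (symdiff A B) = B.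
Proof. apply/setP=> x; rewrite !in_symdiff; by case: (x \in A); case: (x \in B). Qed.
Lemma symdiffvv' A B : symdiff (symdiff B A) A = B.
Proof. apply/setP=> x; rewrite !in_symdiff; by case: (x \in A); case: (x \in B). Qed.
Lemma symdiffvv2 A B : symdiff (symdiff A B) A = B.
Proof. apply/setP=> x; rewrite !in_symdiff; by case: (x \in A); case: (x \in B). Qed.
Lemma symdiffI A B S : symdiff A B :&: S = symdiff (A :&: S) (B :&: S).
Proof. apply/setP=> x; rewrite !(in_symdiff, inE); by case: (x \in A); case: (x \in B); case: (x \in S). Qed.

Definition Le i := [set k : 'I_m | (k <= i)%N].
Definition Ge i := [set k : 'I_m | (i <= k)%N].

Lemma bs_l i B : blade_sign [set i] B = par (B :&: Le i).
Proof.
rewrite /blade_sign /par.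
have -> : [set p : 'I_m * 'I_m | (p.1 \in [set i]) && (p.2 \in B) && (p.2 < p.1)%N]
   = [set (i, k) | k in [set k in B | (k < i)%N]].
  apply/setP=> [[p q]]; rewrite !inE /=.
  apply/idP/imsetP.
  - move=> /andP[/andP[/eqP -> hq] hl]; exists q => //; by rewrite inE hq.
  - move=> [k]; rewrite inE => /andP[hk hl] [-> ->]; by rewrite eqxx hk hl.
rewrite card_imset; last by move=> x y [].
rewrite -(cardsID [set i] (B :&: Le i)).
have -> : B :&: Le i :&: [set i] = [set i] :&: B.
  apply/setP=> x; rewrite !inE; case: (x =P i) => [->|]; rewrite ?leqnn ?andbT ?andbF //.
have -> : B :&: Le i :\: [set i] = [set k in B | (k < i)%N].
  apply/setP=> x; rewrite !inE ltn_neqAle; case: (x \in B); rewrite ?andbF //= andbT.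
  idtac.
by rewrite addnC.
Qed.

Lemma bs_r i B : blade_sign B [set i] = par (B :&: Ge i).
Proof.
rewrite /blade_sign /par.
have -> : [set p : 'I_m * 'I_m | (p.1 \in B) && (p.2 \in [set i]) && (p.2 < p.1)%N]
   = [set (k, i) | k in [set k in B | (i < k)%N]].
  apply/setP=> [[p q]]; rewrite !inE /=.
  apply/idP/imsetP.
  - move=> /andP[/andP[hp /eqP ->] hl]; exists p => //; by rewrite inE hp.
  - move=> [k]; rewrite inE => /andP[hk hl] [-> ->]; by rewrite eqxx hk hl.
rewrite card_imset; last by move=> x y [].
rewrite -(cardsID [set i] (B :&: Ge i)).
have -> : B :&: Ge i :&: [set i] = B :&: [set i].
  apply/setP=> x; rewrite !inE; case: (x =P i) => [->|]; rewrite ?leqnn ?andbT ?andbF //.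
have -> : B :&: Ge i :\: [set i] = [set k in B | (i < k)%N].
  apply/setP=> x; rewrite !inE ltn_neqAle; case: (x \in B); rewrite ?andbF //=.
  by rewrite -val_eqE eq_sym.
by rewrite addnC.
Qed.

Definition Lm i a : Cl m := clmul (gen i) a.
Definition Rm i a : Cl m := clmul a (gen i).

Lemma LmE i a C : Lm i a C = a (symdiff [set i] C) * par (symdiff [set i] C :&: Le i).
Proof.
rewrite /Lm /clmul (bigD1 [set i]) //= big1 ?Rplus_0_r.
  by rewrite /gen eqxx Rmult_1_l bs_l.
move=> A /negPf hA; by rewrite /gen hA !Rmult_0_l.
Qed.

Lemma RmE i a C : Rm i a C = a (symdiff C [set i]) * par (symdiff C [set i] :&: Ge i).
Proof.
rewrite /Rm /clmul (bigD1 (symdiff C [set i])) //= big1 ?Rplus_0_r.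
  by rewrite /gen (symdiffvv2 C [set i]) eqxx Rmult_1_r bs_r.
move=> A hA; rewrite /gen.
case: eqP => [e|]; last by rewrite !Rmult_0_r Rmult_0_l.
case/eqP: hA. by rewrite -e (symdiffC A C) (symdiffvv C A).
Qed.
End Cliff.

Section Cliff2.
Variable m : nat.
Implicit Types (A B C D E : {set 'I_m}) (a b : Cl m) (i j k : 'I_m).

Lemma pLe i j : par ([set i] :&: Le j) = if (i <= j)%N then -1 else 1.
Proof.
case: ifP => h.
- have -> : [set i] :&: Le j = [set i]. apply/setP=> z; rewrite !inE; case: eqP => // ->. by rewrite h.
  by rewrite par1.
- have -> : [set i] :&: Le j = set0. apply/setP=> z; rewrite !inE; case: eqP => // ->. by rewrite h.
  by rewrite par0.
Qed.
Lemma pGe i j : par ([set i] :&: Ge j) = if (j <= i)%N then -1 else 1.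
Proof.
case: ifP => h.
- have -> : [set i] :&: Ge j = [set i]. apply/setP=> z; rewrite !inE; case: eqP => // ->. by rewrite h.
  by rewrite par1.
- have -> : [set i] :&: Ge j = set0. apply/setP=> z; rewrite !inE; case: eqP => // ->. by rewrite h.
  by rewrite par0.
Qed.

Lemma par_sq C : par C * par C = 1.
Proof. rewrite /par; elim: #|C| => [|n IH] /=; [ring | transitivity ((-1)^n * (-1)^n); [ring|exact IH]]. Qed.

Ltac setsolve := apply/setP=> ?; rewrite !(in_symdiff, inE);
  repeat match goal with |- context [?z \in ?X] => case: (z \in X) end;
  repeat match goal with |- context [?z == ?X] => case: (z == X) end; by [].

Ltac expand := rewrite ?LmE ?RmE ?LmE ?RmE ?LmE ?RmE ?symdiffI ?par_symdiff ?pLe ?pGe ?leqnn.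

Lemma LL i j a C : Lm i (Lm j a) C + Lm j (Lm i a) C = if i == j then -2 * a C else 0.
Proof.
expand.
case: (eqVneq i j) => [<-|hij].
- have -> : symdiff [set i] (symdiff [set i] C) = C by setsolve. rewrite leqnn /=.
  have hp := par_sq (C :&: Le i). transitivity (-2 * a C * (par (C :&: Le i) * par (C :&: Le i))); [ring|rewrite hp; ring].
- have -> : symdiff [set j] (symdiff [set i] C) = symdiff [set i] (symdiff [set j] C) by setsolve.
  case: (ltngtP i j) => h.
  + simpl; ring.
  + simpl; ring.
  + by case/eqP: hij; apply: val_inj.
Qed.

Lemma RR i j a C : Rm i (Rm j a) C + Rm j (Rm i a) C = if i == j then -2 * a C else 0.
Proof.
expand.
case: (eqVneq i j) => [<-|hij].
- have -> : symdiff (symdiff C [set i]) [set i] = C by setsolve. rewrite leqnn /=.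
  have hp := par_sq (C :&: Ge i). transitivity (-2 * a C * (par (C :&: Ge i) * par (C :&: Ge i))); [ring|rewrite hp; ring].
- have -> : symdiff (symdiff C [set i]) [set j] = symdiff (symdiff C [set j]) [set i] by setsolve.
  case: (ltngtP i j) => h.
  + simpl; ring.
  + simpl; ring.
  + by case/eqP: hij; apply: val_inj.
Qed.

Lemma LR i j a C : Lm i (Rm j a) C = Rm j (Lm i a) C.
Proof.
expand.
have -> : symdiff (symdiff [set i] C) [set j] = symdiff [set i] (symdiff C [set j]) by setsolve.
case: (ltngtP i j) => h.
+ simpl; ring.
+ simpl; ring.
+ simpl. ring.
Qed.

Definition Tm a : Cl m := fun C => \big[Rplus/0]_j Lm j (Rm j a) C.

Lemma sum_mulr (I : Type) (r : seq I) (P : pred I) (F : I -> R) c :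
  c * \big[Rplus/0]_(i <- r | P i) F i = \big[Rplus/0]_(i <- r | P i) (c * F i).
Proof.
elim: r => [|x r IH]; rewrite ?big_nil ?big_cons; first ring.
case: (P x); rewrite -IH; ring.
Qed.

Lemma sum_const (A : {set 'I_m}) c :
  \big[Rplus/0]_(j : 'I_m) (if j \in A then c else 0) = INR #|A| * c.
Proof.
rewrite -big_mkcond big_const. elim: #|A| => [|n IH] /=; first ring.
rewrite IH. destruct n; simpl; ring.
Qed.

Definition tcoef C : R :=
  - par C * \big[Rplus/0]_(j : 'I_m) (if j \in C then -1 else 1).

Lemma TmE a C : Tm a C = a C * tcoef C.
Proof.
rewrite /Tm /tcoef.
have e : forall j, Lm j (Rm j a) C = a C * (- par C * (if j \in C then -1 else 1)).
  move=> j; expand.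
  have -> : symdiff (symdiff [set j] C) [set j] = C by setsolve.
  have hh : par (C :&: Ge j) * par (C :&: Le j) = par C * (if j \in C then -1 else 1).
    rewrite -par_symdiff.
    have -> : symdiff (C :&: Ge j) (C :&: Le j) = symdiff C (C :&: [set j]).
      apply/setP=> z; rewrite !(in_symdiff, inE). case: (z \in C) => //=.
      case: (ltngtP z j) => h.
      * by apply/esym/eqP => e; rewrite e ltnn in h.
      * by apply/esym/eqP => e; rewrite e ltnn in h.
      * have -> : z = j by apply: val_inj. by rewrite eqxx.
    rewrite par_symdiff. case: ifP => h.
    - have -> : C :&: [set j] = [set j]. apply/setP=> z; rewrite !inE andbC; case: eqP => // ->. by rewrite h.
      by rewrite par1.
    - have -> : C :&: [set j] = set0. apply/setP=> z; rewrite !inE andbC; case: eqP => // ->. by rewrite h.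
      by rewrite par0; ring.
  transitivity (- (a C * (par (C :&: Ge j) * par (C :&: Le j)))); [ring | rewrite hh; ring].
rewrite (eq_bigr _ (fun j _ => e j)) -sum_mulr -sum_mulr. reflexivity.
Qed.

Lemma sum_pm C : \big[Rplus/0]_(j : 'I_m) (if j \in C then -1 else 1) = INR m - 2 * INR #|C|.
Proof.
have e : forall j : 'I_m, (if j \in C then -1 else 1) =
   (if j \in [set: 'I_m] then 1 else 0) + (if j \in C then -2 else 0).
  move=> j; rewrite inE; case: (j \in C); ring.
rewrite (eq_bigr _ (fun j _ => e j)) big_split /= !sum_const cardsT card_ord. move: (INR m) (INR #|C|) => x y. ring.
Qed.

Lemma par_neq0 C : par C <> 0.
Proof. rewrite /par. apply: pow_nonzero. lra. Qed.

Lemma tcoef_neq0 (Hm : odd m) C : tcoef C <> 0.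
Proof.
rewrite /tcoef sum_pm => h.
have h2 : INR m - 2 * INR #|C| = 0.
  case: (Rmult_integral _ _ h) => // h3. exfalso. 
  have h4 : par C = 0 by rewrite -(Ropp_involutive (par C)) h3 Ropp_0.
  exact: (par_neq0 h4).
have h3 : INR m = INR (2 * #|C|)%N.
  rewrite -multE mult_INR. have -> : INR 2 = 2 by simpl; ring. lra.
move/INR_eq: h3 => h4. by rewrite h4 oddM /= in Hm.
Qed.

Lemma Tm_inj (Hm : odd m) a : (forall C, Tm a C = 0) -> forall C, a C = 0.
Proof.
move=> h C. have := h C. rewrite TmE => h1.
case: (Rmult_integral _ _ h1) => // h2. by case: (tcoef_neq0 Hm h2).
Qed.

End Cliff2.

Definition czero (m : nat) : Cl m := fun _ => 0.
Definition cadd (m : nat) (a b : Cl m) : Cl m := fun C => a C + b C.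
Definition cscal (m : nat) (r : R) (a : Cl m) : Cl m := fun C => r * a C.
Arguments czero : clear implicits.
Arguments cadd {m} a b _.
Arguments cscal {m} r a _.

Lemma cadd_assoc (m : nat) : associative (@cadd m).
Proof. move=> a b c; apply: functional_extensionality => C; rewrite /cadd; ring. Qed.
Lemma cadd_comm (m : nat) : commutative (@cadd m).
Proof. move=> a b; apply: functional_extensionality => C; rewrite /cadd; ring. Qed.
Lemma cadd0l (m : nat) : left_id (czero m) (@cadd m).
Proof. move=> a; apply: functional_extensionality => C; rewrite /cadd /czero; ring. Qed.

HB.instance Definition _ (m : nat) :=
  Monoid.isComLaw.Build (Cl m) (czero m) (@cadd m) (@cadd_assoc m) (@cadd_comm m) (@cadd0l m).

Section ClAlg.
Variable m : nat.
Implicit Types (a b : Cl m) (i j k : 'I_m).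

Lemma csumE (I : Type) (r : seq I) (P : pred I) (F : I -> Cl m) C :
  (\big[@cadd m/czero m]_(i <- r | P i) F i) C = \big[Rplus/0]_(i <- r | P i) F i C.
Proof. by apply: (big_morph (fun a : Cl m => a C)). Qed.

Lemma Lm_add i a b : Lm i (cadd a b) = cadd (Lm i a) (Lm i b).
Proof. apply: functional_extensionality => C; rewrite /cadd !LmE; ring. Qed.
Lemma Lm_scal i r a : Lm i (cscal r a) = cscal r (Lm i a).
Proof. apply: functional_extensionality => C; rewrite /cscal !LmE; ring. Qed.
Lemma Lm_zero i : Lm i (czero m) = czero m.
Proof. apply: functional_extensionality => C; rewrite /czero !LmE; ring. Qed.
Lemma Lm_sum i (I : Type) (r : seq I) (P : pred I) (F : I -> Cl m) :
  Lm i (\big[@cadd m/czero m]_(k <- r | P k) F k) = \big[@cadd m/czero m]_(k <- r | P k) Lm i (F k).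
Proof. apply: big_morph; [exact: Lm_add | exact: Lm_zero]. Qed.

Lemma Rm_add i a b : Rm i (cadd a b) = cadd (Rm i a) (Rm i b).
Proof. apply: functional_extensionality => C; rewrite /cadd !RmE; ring. Qed.
Lemma Rm_scal i r a : Rm i (cscal r a) = cscal r (Rm i a).
Proof. apply: functional_extensionality => C; rewrite /cscal !RmE; ring. Qed.
Lemma Rm_zero i : Rm i (czero m) = czero m.
Proof. apply: functional_extensionality => C; rewrite /czero !RmE; ring. Qed.
Lemma Rm_sum i (I : Type) (r : seq I) (P : pred I) (F : I -> Cl m) :
  Rm i (\big[@cadd m/czero m]_(k <- r | P k) F k) = \big[@cadd m/czero m]_(k <- r | P k) Rm i (F k).
Proof. apply: big_morph; [exact: Rm_add | exact: Rm_zero]. Qed.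

Lemma TmS a : Tm a = \big[@cadd m/czero m]_(j : 'I_m) Lm j (Rm j a).
Proof. apply: functional_extensionality => C; by rewrite csumE. Qed.
Lemma Tm_add a b : Tm (cadd a b) = cadd (Tm a) (Tm b).
Proof. apply: functional_extensionality => C; rewrite /cadd !TmE; ring. Qed.
Lemma Tm_scal r a : Tm (cscal r a) = cscal r (Tm a).
Proof. apply: functional_extensionality => C; rewrite /cscal !TmE; ring. Qed.
Lemma Tm_zero : Tm (czero m) = czero m.
Proof. apply: functional_extensionality => C; rewrite /czero !TmE; ring. Qed.
Lemma Tm_sum (I : Type) (r : seq I) (P : pred I) (F : I -> Cl m) :
  Tm (\big[@cadd m/czero m]_(k <- r | P k) F k) = \big[@cadd m/czero m]_(k <- r | P k) Tm (F k).
Proof. apply: big_morph; [exact: Tm_add | exact: Tm_zero]. Qed.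

Lemma LLc i j a : cadd (Lm i (Lm j a)) (Lm j (Lm i a)) = if i == j then cscal (-2) a else czero m.
Proof. apply: functional_extensionality => C; rewrite /cadd LL; case: (i == j) => //. Qed.
Lemma RRc i j a : cadd (Rm i (Rm j a)) (Rm j (Rm i a)) = if i == j then cscal (-2) a else czero m.
Proof. apply: functional_extensionality => C; rewrite /cadd RR; case: (i == j) => //. Qed.
Lemma LRc i j a : Lm i (Rm j a) = Rm j (Lm i a).
Proof. apply: functional_extensionality => C; exact: LR. Qed.

Lemma cscal_sum r (I : Type) (s : seq I) (P : pred I) (F : I -> Cl m) :
  cscal r (\big[@cadd m/czero m]_(k <- s | P k) F k) = \big[@cadd m/czero m]_(k <- s | P k) cscal r (F k).
Proof.
apply: big_morph.
- move=> a b; apply: functional_extensionality => C; rewrite /cscal /cadd; ring.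
- apply: functional_extensionality => C; rewrite /cscal /czero; ring.
Qed.

Lemma sum_delta (F : 'I_m -> 'I_m -> Cl m) :
  \big[@cadd m/czero m]_(i : 'I_m) \big[@cadd m/czero m]_(j : 'I_m) (if i == j then F i j else czero m)
  = \big[@cadd m/czero m]_(i : 'I_m) F i i.
Proof.
apply: eq_bigr => i _. rewrite -big_mkcond /=.
rewrite (eq_bigl (fun j => j == i)); last by move=> j; rewrite eq_sym.
rewrite big_pred1_eq. done.
Qed.

Lemma half_eq a b : cadd a a = cscal (-2) b -> a = cscal (-1) b.
Proof.
move=> h; apply: functional_extensionality => C.
have := f_equal (fun z => z C) h; rewrite /cadd /cscal => h1. lra.
Qed.

Lemma symLL (b : 'I_m -> 'I_m -> Cl m) : (forall i j, b i j = b j i) ->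
  \big[@cadd m/czero m]_(i : 'I_m) \big[@cadd m/czero m]_(j : 'I_m) Lm i (Lm j (b i j))
  = cscal (-1) (\big[@cadd m/czero m]_(j : 'I_m) b j j).
Proof.
move=> hb; apply: half_eq.
set S := (X in cadd X X).
have e : S = \big[@cadd m/czero m]_(i : 'I_m) \big[@cadd m/czero m]_(j : 'I_m) Lm j (Lm i (b i j)).
  rewrite /S exchange_big /=. apply: eq_bigr => i _; apply: eq_bigr => j _. by rewrite hb.
rewrite {2}e /S -big_split /=.
rewrite (eq_bigr (fun i => \big[@cadd m/czero m]_(j : 'I_m) (if i == j then cscal (-2) (b i j) else czero m))).
  by rewrite sum_delta cscal_sum.
move=> i _; rewrite -big_split /=; apply: eq_bigr => j _. by rewrite LLc; case: (i == j).
Qed.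

Lemma symRR (b : 'I_m -> 'I_m -> Cl m) : (forall i j, b i j = b j i) ->
  \big[@cadd m/czero m]_(i : 'I_m) \big[@cadd m/czero m]_(j : 'I_m) Rm i (Rm j (b i j))
  = cscal (-1) (\big[@cadd m/czero m]_(j : 'I_m) b j j).
Proof.
move=> hb; apply: half_eq.
set S := (X in cadd X X).
have e : S = \big[@cadd m/czero m]_(i : 'I_m) \big[@cadd m/czero m]_(j : 'I_m) Rm j (Rm i (b i j)).
  rewrite /S exchange_big /=. apply: eq_bigr => i _; apply: eq_bigr => j _. by rewrite hb.
rewrite {2}e /S -big_split /=.
rewrite (eq_bigr (fun i => \big[@cadd m/czero m]_(j : 'I_m) (if i == j then cscal (-2) (b i j) else czero m))).
  by rewrite sum_delta cscal_sum.
move=> i _; rewrite -big_split /=; apply: eq_bigr => j _. by rewrite RRc; case: (i == j).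
Qed.

End ClAlg.

Section Calc.
Variables (m : nat) (Om : point m -> Prop) (HO : open_Rm Om).
Local Notation F := (point m -> Cl m).
Implicit Types (g h : F) (i j k : 'I_m) (x : point m) (C : {set 'I_m}).

Definition eqOn g h := forall x, Om x -> g x = h x.
Definition hasd j g x C l := derivable_pt_lim (fun t => g (upd x j t) C) (x j) l.

Lemma upd_same x j : upd x j (x j) = x.
Proof. apply: functional_extensionality => i; rewrite /upd; case: eqP => [->|] //. Qed.

Lemma line_in x j : Om x -> exists r, 0 < r /\ forall t, x j - r < t < x j + r -> Om (upd x j t).
Proof.
move=> hx; case: (HO hx) => r [hr H]; exists r; split => // t ht; apply: H => i.
rewrite /upd; case: eqP => [->|_].
- apply: Rabs_def1; lra.
- rewrite Rminus_diag Rabs_R0; lra.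
Qed.

Lemma eqOn_refl g : eqOn g g. Proof. by []. Qed.
Lemma eqOn_sym g h : eqOn g h -> eqOn h g. Proof. move=> H x hx; by rewrite H. Qed.
Lemma eqOn_trans g1 g2 g3 : eqOn g1 g2 -> eqOn g2 g3 -> eqOn g1 g3.
Proof. move=> H1 H2 x hx; by rewrite H1 ?H2. Qed.

Lemma pd_local j g h : eqOn g h -> eqOn (pd j g) (pd j h).
Proof.
move=> H x hx; apply: functional_extensionality => C; rewrite /pd.
case: (line_in j hx) => r [hr Hr].
have -> : (fun l => derivable_pt_lim (fun t => g (upd x j t) C) (x j) l)
        = (fun l => derivable_pt_lim (fun t => h (upd x j t) C) (x j) l).
  apply: functional_extensionality => l; apply: propositional_extensionality; split.
  - apply: (derivable_pt_lim_locally_ext _ _ _ (x j - r) (x j + r)); first lra.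
    by move=> z hz; rewrite H //; apply: Hr.
  - apply: (derivable_pt_lim_locally_ext _ _ _ (x j - r) (x j + r)); first lra.
    by move=> z hz; rewrite H //; apply: Hr.
done.
Qed.

Lemma hasd_local j g h x C l : Om x -> eqOn g h -> hasd j g x C l -> hasd j h x C l.
Proof.
move=> hx H; case: (line_in j hx) => r [hr Hr].
apply: (derivable_pt_lim_locally_ext _ _ _ (x j - r) (x j + r)); first lra.
by move=> z hz; rewrite H //; apply: Hr.
Qed.

Lemma pd_spec j g x C l : hasd j g x C l -> pd j g x C = l.
Proof.
move=> H; rewrite /pd.
have := epsilon_spec (inhabits 0) (fun l => derivable_pt_lim (fun t => g (upd x j t) C) (x j) l) (ex_intro _ l H).
move=> H2; exact: (uniqueness_limite _ _ _ _ H2 H).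
Qed.

Fixpoint sm (n : nat) g : Prop :=
  match n with
  | 0 => True
  | S n => (forall j x C, Om x -> hasd j g x C (pd j g x C)) /\ forall j, sm n (pd j g)
  end.

Lemma sm_mono n g : sm (S n) g -> sm n g.
Proof.
elim: n g => [|n IH] g //= [H1 H2]; split => // j; apply: IH; exact: H2.
Qed.

Lemma sm_mono_le n p g : (p <= n)%N -> sm n g -> sm p g.
Proof.
move=> hk; elim: n hk g => [|n IH] hk g H.
  by rewrite leqn0 in hk; move/eqP: hk => ->.
rewrite leq_eqVlt in hk; case/orP: hk => [/eqP -> //|hk]. apply: IH => //; exact: sm_mono.
Qed.

Lemma sm_1 n g : sm n.+1 g -> sm 1 g.
Proof. move=> H; exact: (@sm_mono_le n.+1 1 g isT H). Qed.

Lemma sm_pd n j g : sm (S n) g -> sm n (pd j g).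
Proof. by case=> _ H; apply: H. Qed.

Lemma sm_ext n g h : eqOn g h -> sm n g -> sm n h.
Proof.
elim: n g h => [|n IH] g h //= H [H1 H2]; split.
- move=> j x C hx. have e := pd_local j H hx. rewrite -e. apply: (hasd_local hx H); exact: H1.
- move=> j; apply: (IH (pd j g)); [exact: pd_local | exact: H2].
Qed.

Definition Fadd g h : F := fun x => cadd (g x) (h x).
Definition Fscal r g : F := fun x => cscal r (g x).
Definition Fzero : F := fun x => czero m.
Definition FL i g : F := fun x => Lm i (g x).
Definition FR i g : F := fun x => Rm i (g x).
Definition FT g : F := fun x => Tm (g x).
Definition Fcm k g : F := fun x => cscal (x k) (g x).
Definition Fsum (I : Type) (r : seq I) (G : I -> F) : F :=
  fun x => \big[@cadd m/czero m]_(i <- r) G i x.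

Lemma hasd_add j g h x C l1 l2 : hasd j g x C l1 -> hasd j h x C l2 -> hasd j (Fadd g h) x C (l1 + l2).
Proof. move=> h1 h2; exact: (derivable_pt_lim_plus _ _ _ _ _ h1 h2). Qed.

Lemma hasd_comp j g x C c D l : hasd j g x D l ->
  hasd j (fun y => fun C' => g y D * c) x C (l * c).
Proof. move=> h1; exact: (derivable_pt_lim_scal_right _ _ _ _ h1). Qed.

Lemma hasd_ext j g h x C l : (forall y, h y C = g y C) -> hasd j g x C l -> hasd j h x C l.
Proof. move=> H; apply: derivable_pt_lim_ext => t; by rewrite H. Qed.

Lemma hasd_zero j x C : hasd j Fzero x C 0.
Proof. exact: derivable_pt_lim_const. Qed.

Lemma hasd_cm j k g x C l : hasd j g x C l ->
  hasd j (Fcm k g) x C ((if k == j then g x C else 0) + x k * l).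
Proof.
move=> h1.
have h0 : derivable_pt_lim (fun t => upd x j t k) (x j) (if k == j then 1 else 0).
  case: eqP => [->|hk].
  - apply: (derivable_pt_lim_ext id); last exact: derivable_pt_lim_id.
    by move=> z; rewrite /upd eqxx.
  - apply: (derivable_pt_lim_ext (fct_cte (x k))); last exact: derivable_pt_lim_const.
    by move=> z; rewrite /upd /fct_cte; case: eqP.
have := derivable_pt_lim_mult _ _ _ _ _ h0 h1.
have e1 : upd x j (x j) k = x k by rewrite upd_same.
have e2 : g (upd x j (x j)) C = g x C by rewrite upd_same.
rewrite /mult_fct /= e1 e2 => H.
have e3 : (if k == j then 1 else 0) * g x C + x k * l = (if k == j then g x C else 0) + x k * l.
  case: (k == j); ring.
rewrite -e3. apply: derivable_pt_lim_ext H => t. by rewrite /Fcm /cscal.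
Qed.

Lemma hasd_sum (I : Type) (r : seq I) (G : I -> F) j x C (l : I -> R) :
  (forall u, hasd j (G u) x C (l u)) -> hasd j (Fsum r G) x C (\big[Rplus/0]_(u <- r) l u).
Proof.
move=> H; elim: r => [|a r IH].
- rewrite big_nil; apply: (hasd_ext (g := Fzero)); last exact: hasd_zero.
  by move=> y; rewrite /Fsum big_nil.
- rewrite big_cons; apply: (hasd_ext (g := Fadd (G a) (Fsum r G))).
    by move=> y; rewrite /Fsum big_cons.
  exact: hasd_add.
Qed.

Lemma sm1_hasd g j x C : sm 1 g -> Om x -> hasd j g x C (pd j g x C).
Proof. by case=> H _ hx; apply: H. Qed.

Lemma pd_add j g h x : Om x -> sm 1 g -> sm 1 h -> pd j (Fadd g h) x = cadd (pd j g x) (pd j h x).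
Proof.
move=> hx sg sh; apply: functional_extensionality => C; apply: pd_spec.
apply: hasd_add; exact: sm1_hasd.
Qed.

Lemma pd_scal j r g x : Om x -> sm 1 g -> pd j (Fscal r g) x = cscal r (pd j g x).
Proof.
move=> hx sg; apply: functional_extensionality => C; apply: pd_spec.
rewrite /cscal Rmult_comm.
apply: (hasd_ext (g := fun y C' => g y C * r)); first by move=> y; rewrite /Fscal /cscal Rmult_comm.
apply: hasd_comp; exact: sm1_hasd.
Qed.

Lemma pd_FL j i g x : Om x -> sm 1 g -> pd j (FL i g) x = Lm i (pd j g x).
Proof.
move=> hx sg; apply: functional_extensionality => C; apply: pd_spec.
rewrite LmE.
apply: (hasd_ext (g := fun y C' => g y (symdiff [set i] C) * par (symdiff [set i] C :&: Le i))).
  by move=> y; rewrite /FL LmE.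
apply: hasd_comp; exact: sm1_hasd.
Qed.

Lemma pd_FR j i g x : Om x -> sm 1 g -> pd j (FR i g) x = Rm i (pd j g x).
Proof.
move=> hx sg; apply: functional_extensionality => C; apply: pd_spec.
rewrite RmE.
apply: (hasd_ext (g := fun y C' => g y (symdiff C [set i]) * par (symdiff C [set i] :&: Ge i))).
  by move=> y; rewrite /FR RmE.
apply: hasd_comp; exact: sm1_hasd.
Qed.

Lemma pd_FT j g x : Om x -> sm 1 g -> pd j (FT g) x = Tm (pd j g x).
Proof.
move=> hx sg; apply: functional_extensionality => C; apply: pd_spec.
rewrite TmE.
apply: (hasd_ext (g := fun y C' => g y C * tcoef C)).
  by move=> y; rewrite /FT TmE.
apply: hasd_comp; exact: sm1_hasd.
Qed.

Lemma pd_cm j k g x : Om x -> sm 1 g ->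
  pd j (Fcm k g) x = cadd (if k == j then g x else czero m) (cscal (x k) (pd j g x)).
Proof.
move=> hx sg; apply: functional_extensionality => C; apply: pd_spec.
rewrite /cadd /cscal.
have -> : (if k == j then g x else czero m) C = (if k == j then g x C else 0) by case: (k == j).
apply: hasd_cm; exact: sm1_hasd.
Qed.

Lemma pd_sum (I : Type) (r : seq I) (G : I -> F) j x : Om x -> (forall u, sm 1 (G u)) ->
  pd j (Fsum r G) x = \big[@cadd m/czero m]_(u <- r) pd j (G u) x.
Proof.
move=> hx sg; apply: functional_extensionality => C; apply: pd_spec.
rewrite csumE. apply: hasd_sum => u; exact: sm1_hasd.
Qed.

Lemma pd_zero j x : pd j Fzero x = czero m.
Proof. apply: functional_extensionality => C; apply: pd_spec; exact: hasd_zero. Qed.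

Lemma sm_zero n : sm n Fzero.
Proof.
elim: n => [|n IH] //=; split.
- move=> j x C hx; rewrite pd_zero; exact: hasd_zero.
- move=> j; apply: (sm_ext (g := Fzero)) => // x hx; by rewrite pd_zero.
Qed.

Lemma sm_add n g h : sm n g -> sm n h -> sm n (Fadd g h).
Proof.
elim: n g h => [|n IH] g h //= sg sh; split.
- move=> j x C hx; rewrite (pd_add j hx (@sm_1 n _ sg) (@sm_1 n _ sh)).
  apply: hasd_add; [exact: sg.1 | exact: sh.1].
- move=> j; apply: (sm_ext (g := Fadd (pd j g) (pd j h))).
  + move=> x hx; rewrite pd_add //; [exact: (@sm_1 n _ sg) | exact: (@sm_1 n _ sh)].
  + apply: IH; [exact: sg.2 | exact: sh.2].
Qed.

Ltac sm1 H := exact: (@sm_1 _ _ H).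

Lemma sm_scal n r g : sm n g -> sm n (Fscal r g).
Proof.
elim: n g => [|n IH] g //= sg; split.
- move=> j x C hx; rewrite (pd_scal j r hx (@sm_1 n _ sg)).
  rewrite /cscal Rmult_comm.
  apply: (hasd_ext (g := fun y C' => g y C * r)); first by move=> y; rewrite /Fscal /cscal Rmult_comm.
  apply: hasd_comp; exact: sg.1.
- move=> j; apply: (sm_ext (g := Fscal r (pd j g))).
  + move=> x hx; rewrite pd_scal //; sm1 sg.
  + apply: IH; exact: sg.2.
Qed.

Lemma sm_FL n i g : sm n g -> sm n (FL i g).
Proof.
elim: n g => [|n IH] g //= sg; split.
- move=> j x C hx; rewrite (pd_FL j i hx (@sm_1 n _ sg)) LmE.
  apply: (hasd_ext (g := fun y C' => g y (symdiff [set i] C) * par (symdiff [set i] C :&: Le i))).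
    by move=> y; rewrite /FL LmE.
  apply: hasd_comp; exact: sg.1.
- move=> j; apply: (sm_ext (g := FL i (pd j g))).
  + move=> x hx; rewrite pd_FL //; sm1 sg.
  + apply: IH; exact: sg.2.
Qed.

Lemma sm_FR n i g : sm n g -> sm n (FR i g).
Proof.
elim: n g => [|n IH] g //= sg; split.
- move=> j x C hx; rewrite (pd_FR j i hx (@sm_1 n _ sg)) RmE.
  apply: (hasd_ext (g := fun y C' => g y (symdiff C [set i]) * par (symdiff C [set i] :&: Ge i))).
    by move=> y; rewrite /FR RmE.
  apply: hasd_comp; exact: sg.1.
- move=> j; apply: (sm_ext (g := FR i (pd j g))).
  + move=> x hx; rewrite pd_FR //; sm1 sg.
  + apply: IH; exact: sg.2.
Qed.

Lemma sm_FT n g : sm n g -> sm n (FT g).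
Proof.
elim: n g => [|n IH] g //= sg; split.
- move=> j x C hx; rewrite (pd_FT j hx (@sm_1 n _ sg)) TmE.
  apply: (hasd_ext (g := fun y C' => g y C * tcoef C)).
    by move=> y; rewrite /FT TmE.
  apply: hasd_comp; exact: sg.1.
- move=> j; apply: (sm_ext (g := FT (pd j g))).
  + move=> x hx; rewrite pd_FT //; sm1 sg.
  + apply: IH; exact: sg.2.
Qed.

Lemma sm_cm n k g : sm n g -> sm n (Fcm k g).
Proof.
elim: n g => [|n IH] g //= sg; split.
- move=> j x C hx; rewrite (pd_cm j k hx (@sm_1 n _ sg)) /cadd /cscal.
  have -> : (if k == j then g x else czero m) C = (if k == j then g x C else 0) by case: (k == j).
  apply: hasd_cm; exact: sg.1.
- move=> j; apply: (sm_ext (g := Fadd (if k == j then g else Fzero) (Fcm k (pd j g)))).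
  + move=> x hx; rewrite pd_cm //; last sm1 sg.
    by rewrite /Fadd /Fcm; case: (k == j).
  + apply: sm_add; last by apply: IH; exact: sg.2.
    case: (k == j); [exact: sm_mono | exact: sm_zero].
Qed.

Lemma sm_sum n (I : Type) (r : seq I) (G : I -> F) : (forall u, sm n (G u)) -> sm n (Fsum r G).
Proof.
move=> H; elim: r => [|a r IH].
- apply: (sm_ext (g := Fzero)); last exact: sm_zero.
  by move=> x _; rewrite /Fsum big_nil.
- apply: (sm_ext (g := Fadd (G a) (Fsum r G))); last exact: sm_add.
  by move=> x _; rewrite /Fsum big_cons.
Qed.

End Calc.

Section Ops.
Variables (m : nat) (Om : point m -> Prop) (HO : open_Rm Om).
Local Notation F := (point m -> Cl m).
Local Notation eqOn := (eqOn Om).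
Local Notation sm := (sm Om).
Implicit Types (g h : F) (i j k : 'I_m) (x : point m) (a b : Cl m).
Local Notation sm_cm := (sm_cm HO).
Local Notation pd_sum := (@pd_sum m Om).
Local Notation pd_FL := (@pd_FL m Om).
Local Notation pd_FR := (@pd_FR m Om).
Local Notation pd_FT := (@pd_FT m Om).
Local Notation pd_cm := (@pd_cm m Om).
Local Notation pd_add := (@pd_add m Om).
Local Notation pd_scal := (@pd_scal m Om).
Local Notation sm_FR := (sm_FR HO).
Local Notation sm_FL := (sm_FL HO).
Local Notation sm_FT := (sm_FT HO).
Local Notation sm_sum := (sm_sum HO).
Local Notation sm_add := (sm_add HO).
Local Notation sm_zero := (sm_zero HO).
Local Notation sm_scal := (sm_scal HO).
Local Notation sm_ext := (sm_ext HO).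

Definition XrC x a : Cl m := \big[@cadd m/czero m]_(k : 'I_m) cscal (x k) (Rm k a).
Definition XlC x a : Cl m := \big[@cadd m/czero m]_(k : 'I_m) cscal (x k) (Lm k a).
Definition Xr g : F := fun x => clmul (g x) (vec x).
Definition Xl g : F := fun x => clmul (vec x) (g x).

Lemma exch (G : 'I_m -> 'I_m -> Cl m) :
  \big[@cadd m/czero m]_(i : 'I_m) \big[@cadd m/czero m]_(j : 'I_m) G i j =
  \big[@cadd m/czero m]_(j : 'I_m) \big[@cadd m/czero m]_(i : 'I_m) G i j.
Proof. exact: exchange_big. Qed.

Lemma sum_if_eq (G : 'I_m -> Cl m) j :
  \big[@cadd m/czero m]_(k : 'I_m) (if k == j then G k else czero m) = G j.
Proof. by rewrite -big_mkcond /= big_pred1_eq. Qed.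

Lemma clmul_vec_r a x : clmul a (vec x) = XrC x a.
Proof.
apply: functional_extensionality => C; rewrite /XrC csumE /clmul.
have e : forall A : {set 'I_m}, a A * vec x (symdiff A C) * blade_sign A (symdiff A C)
   = \big[Rplus/0]_(k : 'I_m) (x k * (a A * gen k (symdiff A C) * blade_sign A (symdiff A C))).
  move=> A; rewrite /vec.
  transitivity (a A * blade_sign A (symdiff A C) * \big[Rplus/0]_(j : 'I_m) (x j * gen j (symdiff A C))); first ring.
  rewrite sum_mulr. apply: eq_bigr => k _; ring.
rewrite (eq_bigr _ (fun A _ => e A)) exchange_big /=. apply: eq_bigr => k _.
rewrite /cscal -sum_mulr. done.
Qed.

Lemma clmul_vec_l a x : clmul (vec x) a = XlC x a.
Proof.
apply: functional_extensionality => C; rewrite /XlC csumE /clmul.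
have e : forall A : {set 'I_m}, vec x A * a (symdiff A C) * blade_sign A (symdiff A C)
   = \big[Rplus/0]_(k : 'I_m) (x k * (gen k A * a (symdiff A C) * blade_sign A (symdiff A C))).
  move=> A; rewrite /vec.
  transitivity (a (symdiff A C) * blade_sign A (symdiff A C) * \big[Rplus/0]_(j : 'I_m) (x j * gen j A)); first ring.
  rewrite sum_mulr. apply: eq_bigr => k _; ring.
rewrite (eq_bigr _ (fun A _ => e A)) exchange_big /=. apply: eq_bigr => k _.
rewrite /cscal -sum_mulr. done.
Qed.

Lemma XrE g : Xr g = Fsum (index_enum 'I_m) (fun k => Fcm k (FR k g)).
Proof. apply: functional_extensionality => x; by rewrite /Xr clmul_vec_r. Qed.
Lemma XlE g : Xl g = Fsum (index_enum 'I_m) (fun k => Fcm k (FL k g)).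
Proof. apply: functional_extensionality => x; by rewrite /Xl clmul_vec_l. Qed.

Lemma DLE g : diracL g = Fsum (index_enum 'I_m) (fun j => FL j (pd j g)).
Proof. apply: functional_extensionality => x; apply: functional_extensionality => C; by rewrite /Fsum csumE. Qed.
Lemma DRE g : diracR g = Fsum (index_enum 'I_m) (fun j => FR j (pd j g)).
Proof. apply: functional_extensionality => x; apply: functional_extensionality => C; by rewrite /Fsum csumE. Qed.
Lemma lapE g : lap g = Fsum (index_enum 'I_m) (fun j => pd j (pd j g)).
Proof. apply: functional_extensionality => x; apply: functional_extensionality => C; by rewrite /Fsum csumE. Qed.

Lemma sm_Xr n g : sm n g -> sm n (Xr g).
Proof. move=> H; rewrite XrE; apply: sm_sum => k; apply: sm_cm; exact: sm_FR. Qed.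
Lemma sm_Xl n g : sm n g -> sm n (Xl g).
Proof. move=> H; rewrite XlE; apply: sm_sum => k; apply: sm_cm; exact: sm_FL. Qed.
Lemma sm_DL n g : sm n.+1 g -> sm n (diracL g).
Proof. move=> H; rewrite DLE; apply: sm_sum => k; apply: sm_FL; exact: sm_pd. Qed.
Lemma sm_DR n g : sm n.+1 g -> sm n (diracR g).
Proof. move=> H; rewrite DRE; apply: sm_sum => k; apply: sm_FR; exact: sm_pd. Qed.
Lemma sm_lap n g : sm n.+2 g -> sm n (lap g).
Proof. move=> H; rewrite lapE; apply: sm_sum => k; do 2 apply: sm_pd; exact: H. Qed.

Lemma DL_local g h : eqOn g h -> eqOn (diracL g) (diracL h).
Proof. move=> H x hx; rewrite !DLE /Fsum; apply: eq_bigr => j _; by rewrite /FL (pd_local HO j H hx). Qed.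
Lemma DR_local g h : eqOn g h -> eqOn (diracR g) (diracR h).
Proof. move=> H x hx; rewrite !DRE /Fsum; apply: eq_bigr => j _; by rewrite /FR (pd_local HO j H hx). Qed.
Lemma lap_local g h : eqOn g h -> eqOn (lap g) (lap h).
Proof.
move=> H x hx; rewrite !lapE /Fsum; apply: eq_bigr => j _.
by rewrite (pd_local HO j (pd_local HO j H) hx).
Qed.
Lemma Xr_local g h : eqOn g h -> eqOn (Xr g) (Xr h).
Proof. move=> H x hx; by rewrite /Xr H. Qed.
Lemma Xl_local g h : eqOn g h -> eqOn (Xl g) (Xl h).
Proof. move=> H x hx; by rewrite /Xl H. Qed.
Lemma FT_local g h : eqOn g h -> eqOn (FT g) (FT h).
Proof. move=> H x hx; by rewrite /FT H. Qed.

Lemma pd_DL k g x : Om x -> sm 2 g ->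
  pd k (diracL g) x = \big[@cadd m/czero m]_(j : 'I_m) Lm j (pd k (pd j g) x).
Proof.
move=> hx H; rewrite DLE pd_sum //.
  apply: eq_bigr => j _; rewrite pd_FL //. apply: sm_pd; exact: H.
move=> j; apply: sm_FL; apply: sm_pd; exact: H.
Qed.
Lemma pd_DR k g x : Om x -> sm 2 g ->
  pd k (diracR g) x = \big[@cadd m/czero m]_(j : 'I_m) Rm j (pd k (pd j g) x).
Proof.
move=> hx H; rewrite DRE pd_sum //.
  apply: eq_bigr => j _; rewrite pd_FR //. apply: sm_pd; exact: H.
move=> j; apply: sm_FR; apply: sm_pd; exact: H.
Qed.

Lemma pd_Xr j g x : Om x -> sm 1 g -> pd j (Xr g) x = cadd (Rm j (g x)) (XrC x (pd j g x)).
Proof.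
move=> hx H; rewrite XrE pd_sum //; last by move=> k; apply: sm_cm; apply: sm_FR.
rewrite (eq_bigr (fun k => cadd (if k == j then Rm k (g x) else czero m) (cscal (x k) (Rm k (pd j g x))))).
  rewrite big_split /= sum_if_eq. done.
move=> k _; have hs : sm 1 (FR k g) by exact: sm_FR.
rewrite pd_cm // pd_FR //; by case: (k == j).
Qed.

Lemma pd_Xl j g x : Om x -> sm 1 g -> pd j (Xl g) x = cadd (Lm j (g x)) (XlC x (pd j g x)).
Proof.
move=> hx H; rewrite XlE pd_sum //; last by move=> k; apply: sm_cm; apply: sm_FL.
rewrite (eq_bigr (fun k => cadd (if k == j then Lm k (g x) else czero m) (cscal (x k) (Lm k (pd j g x))))).
  rewrite big_split /= sum_if_eq. done.
move=> k _; have hs : sm 1 (FL k g) by exact: sm_FL.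
rewrite pd_cm // pd_FL //; by case: (k == j).
Qed.

Lemma XrC_sum x (I : Type) (r : seq I) (G : I -> Cl m) :
  XrC x (\big[@cadd m/czero m]_(u <- r) G u) = \big[@cadd m/czero m]_(u <- r) XrC x (G u).
Proof.
rewrite /XrC (eq_bigr (fun k => \big[@cadd m/czero m]_(u <- r) cscal (x k) (Rm k (G u)))).
  by rewrite exchange_big.
move=> k _. rewrite Rm_sum cscal_sum. done.
Qed.
Lemma XlC_sum x (I : Type) (r : seq I) (G : I -> Cl m) :
  XlC x (\big[@cadd m/czero m]_(u <- r) G u) = \big[@cadd m/czero m]_(u <- r) XlC x (G u).
Proof.
rewrite /XlC (eq_bigr (fun k => \big[@cadd m/czero m]_(u <- r) cscal (x k) (Lm k (G u)))).
  by rewrite exchange_big.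
move=> k _. rewrite Lm_sum cscal_sum. done.
Qed.


Lemma TmS' a : Tm a = \big[@cadd m/czero m]_(j : 'I_m) Rm j (Lm j a).
Proof. rewrite TmS; apply: eq_bigr => j _; exact: LRc. Qed.

Lemma LT j a : cadd (Lm j (Tm a)) (Tm (Lm j a)) = cscal (-2) (Rm j a).
Proof.
rewrite !TmS Lm_sum.
rewrite (eq_bigr (fun i => Lm i (Lm j (Rm i a))) (F1 := fun i => Lm i (Rm i (Lm j a)))); last first.
  by move=> i _; rewrite -LRc.
rewrite -big_split /=.
rewrite (eq_bigr (fun i => if i == j then cscal (-2) (Rm i a) else czero m)).
  by rewrite sum_if_eq.
by move=> i _; rewrite LLc eq_sym.
Qed.

Lemma RT j a : cadd (Rm j (Tm a)) (Tm (Rm j a)) = cscal (-2) (Lm j a).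
Proof.
rewrite !TmS' Rm_sum.
rewrite (eq_bigr (fun i => Rm i (Rm j (Lm i a))) (F1 := fun i => Rm i (Lm i (Rm j a)))); last first.
  by move=> i _; rewrite LRc.
rewrite -big_split /=.
rewrite (eq_bigr (fun i => if i == j then cscal (-2) (Lm i a) else czero m)).
  by rewrite sum_if_eq.
by move=> i _; rewrite RRc eq_sym.
Qed.

Lemma cscal_cscal r1 r2 a : cscal r1 (cscal r2 a) = cscal (r1 * r2) a.
Proof. apply: functional_extensionality => C; rewrite /cscal; ring. Qed.

Lemma Lm_XrC j x b : Lm j (XrC x b) = XrC x (Lm j b).
Proof. rewrite /XrC Lm_sum; apply: eq_bigr => k _; by rewrite Lm_scal LRc. Qed.
Lemma Rm_XlC j x b : Rm j (XlC x b) = XlC x (Rm j b).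
Proof. rewrite /XlC Rm_sum; apply: eq_bigr => k _; by rewrite Rm_scal LRc. Qed.

Lemma XrC_add x a b : XrC x (cadd a b) = cadd (XrC x a) (XrC x b).
Proof.
rewrite /XrC -big_split /=; apply: eq_bigr => k _; rewrite Rm_add.
apply: functional_extensionality => C; rewrite /cscal /cadd; ring.
Qed.
Lemma XlC_add x a b : XlC x (cadd a b) = cadd (XlC x a) (XlC x b).
Proof.
rewrite /XlC -big_split /=; apply: eq_bigr => k _; rewrite Lm_add.
apply: functional_extensionality => C; rewrite /cscal /cadd; ring.
Qed.
Lemma XrC_scal x r a : XrC x (cscal r a) = cscal r (XrC x a).
Proof. rewrite /XrC cscal_sum; apply: eq_bigr => k _; by rewrite Rm_scal !cscal_cscal Rmult_comm. Qed.
Lemma XlC_scal x r a : XlC x (cscal r a) = cscal r (XlC x a).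
Proof. rewrite /XlC cscal_sum; apply: eq_bigr => k _; by rewrite Lm_scal !cscal_cscal Rmult_comm. Qed.
Lemma XrC_zero x : XrC x (czero m) = czero m.
Proof. rewrite /XrC big1 // => k _; rewrite Rm_zero; apply: functional_extensionality => C; rewrite /cscal /czero; ring. Qed.
Lemma XlC_zero x : XlC x (czero m) = czero m.
Proof. rewrite /XlC big1 // => k _; rewrite Lm_zero; apply: functional_extensionality => C; rewrite /cscal /czero; ring. Qed.

Lemma DLx g x : diracL g x = \big[@cadd m/czero m]_(j : 'I_m) Lm j (pd j g x).
Proof. by rewrite DLE. Qed.
Lemma DRx g x : diracR g x = \big[@cadd m/czero m]_(j : 'I_m) Rm j (pd j g x).
Proof. by rewrite DRE. Qed.
Lemma lapx g x : lap g x = \big[@cadd m/czero m]_(j : 'I_m) pd j (pd j g) x.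
Proof. by rewrite lapE. Qed.
Lemma Xrx g x : Xr g x = XrC x (g x).
Proof. by rewrite /Xr clmul_vec_r. Qed.
Lemma Xlx g x : Xl g x = XlC x (g x).
Proof. by rewrite /Xl clmul_vec_l. Qed.

Lemma O1 g : sm 1 g -> eqOn (diracL (Xr g)) (Fadd (Xr (diracL g)) (FT g)).
Proof.
move=> H x hx; rewrite DLx /Fadd Xrx /FT DLx.
rewrite (eq_bigr (fun j => cadd (Lm j (Rm j (g x))) (XrC x (Lm j (pd j g x))))); last first.
  by move=> j _; rewrite pd_Xr // Lm_add Lm_XrC.
rewrite big_split /= -XrC_sum -TmS cadd_comm. done.
Qed.

Lemma O1' g : sm 1 g -> eqOn (diracR (Xl g)) (Fadd (Xl (diracR g)) (FT g)).
Proof.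
move=> H x hx; rewrite DRx /Fadd Xlx /FT DRx.
rewrite (eq_bigr (fun j => cadd (Rm j (Lm j (g x))) (XlC x (Rm j (pd j g x))))); last first.
  by move=> j _; rewrite pd_Xl // Rm_add Rm_XlC.
rewrite big_split /= -XlC_sum -TmS' cadd_comm. done.
Qed.

Lemma O2 h : sm 1 h -> eqOn (Fadd (diracL (FT h)) (FT (diracL h))) (Fscal (-2) (diracR h)).
Proof.
move=> H x hx; rewrite /Fadd /FT /Fscal !DLx DRx Tm_sum -big_split /= cscal_sum.
apply: eq_bigr => j _; by rewrite pd_FT // LT.
Qed.

Lemma O2' h : sm 1 h -> eqOn (Fadd (diracR (FT h)) (FT (diracR h))) (Fscal (-2) (diracL h)).
Proof.
move=> H x hx; rewrite /Fadd /FT /Fscal !DRx DLx Tm_sum -big_split /= cscal_sum.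
apply: eq_bigr => j _; by rewrite pd_FT // RT.
Qed.

End Ops.

Section Ops2.
Variables (m : nat) (Om : point m -> Prop) (HO : open_Rm Om).
Local Notation F := (point m -> Cl m).
Local Notation eqOn := (eqOn Om).
Local Notation sm := (sm Om).
Implicit Types (g h : F) (i j k : 'I_m) (x : point m) (a b : Cl m).
Local Notation sm_cm := (sm_cm HO).
Local Notation pd_sum := (@pd_sum m Om).
Local Notation pd_FL := (@pd_FL m Om).
Local Notation pd_FR := (@pd_FR m Om).
Local Notation pd_FT := (@pd_FT m Om).
Local Notation pd_cm := (@pd_cm m Om).
Local Notation pd_add := (@pd_add m Om).
Local Notation pd_scal := (@pd_scal m Om).
Local Notation pd_Xr := (@pd_Xr m Om HO).
Local Notation pd_Xl := (@pd_Xl m Om HO).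
Local Notation sm_FR := (sm_FR HO).
Local Notation sm_FL := (sm_FL HO).
Local Notation sm_FT := (sm_FT HO).
Local Notation sm_sum := (sm_sum HO).
Local Notation sm_add := (sm_add HO).
Local Notation sm_zero := (sm_zero HO).
Local Notation sm_scal := (sm_scal HO).
Local Notation sm_ext := (sm_ext HO).
Local Notation sm_Xr := (sm_Xr HO).
Local Notation sm_Xl := (sm_Xl HO).
Local Notation sm_DL := (sm_DL HO).
Local Notation sm_DR := (sm_DR HO).
Local Notation sm_lap := (sm_lap HO).
Local Notation pd_local := (pd_local HO).
Local Notation pd_DL := (pd_DL HO).
Local Notation pd_DR := (pd_DR HO).

Lemma DL_add g h : sm 1 g -> sm 1 h -> eqOn (diracL (Fadd g h)) (Fadd (diracL g) (diracL h)).
Proof.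
move=> sg sh x hx; rewrite /Fadd !DLx -big_split /=; apply: eq_bigr => j _.
by rewrite pd_add // Lm_add.
Qed.
Lemma DR_add g h : sm 1 g -> sm 1 h -> eqOn (diracR (Fadd g h)) (Fadd (diracR g) (diracR h)).
Proof.
move=> sg sh x hx; rewrite /Fadd !DRx -big_split /=; apply: eq_bigr => j _.
by rewrite pd_add // Rm_add.
Qed.
Lemma DL_scal r g : sm 1 g -> eqOn (diracL (Fscal r g)) (Fscal r (diracL g)).
Proof.
move=> sg x hx; rewrite /Fscal !DLx cscal_sum; apply: eq_bigr => j _.
by rewrite pd_scal // Lm_scal.
Qed.
Lemma DR_scal r g : sm 1 g -> eqOn (diracR (Fscal r g)) (Fscal r (diracR g)).
Proof.
move=> sg x hx; rewrite /Fscal !DRx cscal_sum; apply: eq_bigr => j _.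
by rewrite pd_scal // Rm_scal.
Qed.
Lemma DL_zero : eqOn (diracL (@Fzero m)) (@Fzero m).
Proof. move=> x hx; rewrite DLx big1 // => j _; by rewrite pd_zero Lm_zero. Qed.
Lemma DR_zero : eqOn (diracR (@Fzero m)) (@Fzero m).
Proof. move=> x hx; rewrite DRx big1 // => j _; by rewrite pd_zero Rm_zero. Qed.

Lemma pd_add_loc j g h : sm 1 g -> sm 1 h -> eqOn (pd j (Fadd g h)) (Fadd (pd j g) (pd j h)).
Proof. move=> sg sh x hx; by rewrite pd_add. Qed.

Lemma lap_add g h : sm 2 g -> sm 2 h -> eqOn (lap (Fadd g h)) (Fadd (lap g) (lap h)).
Proof.
move=> sg sh x hx; rewrite /Fadd !lapx -big_split /=; apply: eq_bigr => j _.
rewrite (pd_local _ (pd_add_loc j (sm_1 sg) (sm_1 sh))) // pd_add //; exact: sm_pd.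
Qed.
Lemma lap_scal r g : sm 2 g -> eqOn (lap (Fscal r g)) (Fscal r (lap g)).
Proof.
move=> sg x hx; rewrite /Fscal !lapx cscal_sum; apply: eq_bigr => j _.
have e : eqOn (pd j (Fscal r g)) (Fscal r (pd j g)) by move=> y hy; rewrite pd_scal //; exact: (sm_1 sg).
rewrite (pd_local _ e) // pd_scal //; exact: sm_pd.
Qed.
Lemma lap_zero : eqOn (lap (@Fzero m)) (@Fzero m).
Proof.
move=> x hx; rewrite lapx big1 // => j _.
have e : eqOn (pd j (@Fzero m)) (@Fzero m) by move=> y hy; rewrite pd_zero.
by rewrite (pd_local _ e) // pd_zero.
Qed.

Lemma pdXr_loc j g : sm 1 g -> eqOn (pd j (Xr g)) (Fadd (FR j g) (Xr (pd j g))).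
Proof. move=> sg x hx; by rewrite pd_Xr // /Fadd Xrx. Qed.
Lemma pdXl_loc j g : sm 1 g -> eqOn (pd j (Xl g)) (Fadd (FL j g) (Xl (pd j g))).
Proof. move=> sg x hx; by rewrite pd_Xl // /Fadd Xlx. Qed.

Lemma O7 g : sm 2 g -> eqOn (lap (Xr g)) (Fadd (Xr (lap g)) (Fscal 2 (diracR g))).
Proof.
move=> sg x hx; rewrite lapx /Fadd /Fscal Xrx lapx DRx XrC_sum cscal_sum -big_split /=.
apply: eq_bigr => j _.
have s1 : sm 1 (pd j g) by exact: sm_pd.
rewrite (pd_local _ (pdXr_loc j (sm_1 sg))) // pd_add //; last by apply: sm_Xr.
  2: by apply: sm_FR; exact: (sm_1 sg).
rewrite pd_FR //; last exact: (sm_1 sg).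
rewrite pd_Xr //.
apply: functional_extensionality => C; rewrite /cadd /cscal; ring.
Qed.

Lemma O8 g : sm 2 g -> eqOn (lap (Xl g)) (Fadd (Xl (lap g)) (Fscal 2 (diracL g))).
Proof.
move=> sg x hx; rewrite lapx /Fadd /Fscal Xlx lapx DLx XlC_sum cscal_sum -big_split /=.
apply: eq_bigr => j _.
have s1 : sm 1 (pd j g) by exact: sm_pd.
rewrite (pd_local _ (pdXl_loc j (sm_1 sg))) // pd_add //; last by apply: sm_Xl.
  2: by apply: sm_FL; exact: (sm_1 sg).
rewrite pd_FL //; last exact: (sm_1 sg).
rewrite pd_Xl //.
apply: functional_extensionality => C; rewrite /cadd /cscal; ring.
Qed.

Lemma O9 g : sm 2 g -> eqOn (lap (FT g)) (FT (lap g)).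
Proof.
move=> sg x hx; rewrite lapx /FT lapx Tm_sum; apply: eq_bigr => j _.
have e : eqOn (pd j (FT g)) (FT (pd j g)) by move=> y hy; rewrite pd_FT //; exact: (sm_1 sg).
rewrite (pd_local _ e) // pd_FT //; exact: sm_pd.
Qed.

Definition sym2 h x := forall i j, pd i (pd j h) x = pd j (pd i h) x.

Lemma O4 h x : Om x -> sm 2 h -> sym2 h x -> diracL (diracL h) x = cscal (-1) (lap h x).
Proof.
move=> hx sh hs; rewrite DLx lapx.
rewrite (eq_bigr (fun i => \big[@cadd m/czero m]_(j : 'I_m) Lm i (Lm j (pd i (pd j h) x)))).
  by apply: symLL => i j; apply: hs.
by move=> i _; rewrite pd_DL // Lm_sum.
Qed.

Lemma O5 h x : Om x -> sm 2 h -> sym2 h x -> diracR (diracR h) x = cscal (-1) (lap h x).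
Proof.
move=> hx sh hs; rewrite DRx lapx.
rewrite (eq_bigr (fun i => \big[@cadd m/czero m]_(j : 'I_m) Rm i (Rm j (pd i (pd j h) x)))).
  by apply: symRR => i j; apply: hs.
by move=> i _; rewrite pd_DR // Rm_sum.
Qed.

Lemma O6 h x : Om x -> sm 2 h -> sym2 h x -> diracL (diracR h) x = diracR (diracL h) x.
Proof.
move=> hx sh hs; rewrite DLx DRx.
rewrite (eq_bigr (fun i => \big[@cadd m/czero m]_(j : 'I_m) Lm i (Rm j (pd i (pd j h) x)))); last first.
  by move=> i _; rewrite pd_DR // Lm_sum.
rewrite [RHS](eq_bigr (fun i => \big[@cadd m/czero m]_(j : 'I_m) Rm i (Lm j (pd i (pd j h) x)))); last first.
  by move=> i _; rewrite pd_DL // Rm_sum.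
rewrite exch; apply: eq_bigr => j _; apply: eq_bigr => i _.
by rewrite LRc hs.
Qed.

Lemma sym2_DL h x : Om x -> sm 3 h -> (forall k, sym2 (pd k h) x) -> sym2 (diracL h) x.
Proof.
move=> hx sh hs i j.
have e : forall k, eqOn (pd k (diracL h)) (Fsum (index_enum 'I_m) (fun l => FL l (pd k (pd l h)))).
  move=> k y hy; rewrite pd_DL //; exact: sm_mono.
have sk : forall k l, sm 1 (FL l (pd k (pd l h))).
  move=> k l; apply: sm_FL; do 2 apply: sm_pd; exact: sh.
rewrite (pd_local _ (e j)) // (pd_local _ (e i)) // !pd_sum //.
apply: eq_bigr => l _; rewrite !pd_FL //; try (do 2 apply: sm_pd; exact: sh).
have := hs l i j.
by move=> ->.
Qed.


Lemma sym2_DR h x : Om x -> sm 3 h -> (forall k, sym2 (pd k h) x) -> sym2 (diracR h) x.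
Proof.
move=> hx sh hs i j.
have e : forall k, eqOn (pd k (diracR h)) (Fsum (index_enum 'I_m) (fun l => FR l (pd k (pd l h)))).
  move=> k y hy; rewrite pd_DR //; exact: sm_mono.
have sk : forall k l, sm 1 (FR l (pd k (pd l h))).
  move=> k l; apply: sm_FR; do 2 apply: sm_pd; exact: sh.
rewrite (pd_local _ (e j)) // (pd_local _ (e i)) // !pd_sum //.
apply: eq_bigr => l _; rewrite !pd_FR //; try (do 2 apply: sm_pd; exact: sh).
have := hs l i j.
by move=> ->.
Qed.

Lemma sym2_lap h x : Om x -> sm 4 h -> (forall k, sym2 (pd k (pd k h)) x) -> sym2 (lap h) x.
Proof.
move=> hx sh hs i j.
have e : forall k, eqOn (pd k (lap h)) (Fsum (index_enum 'I_m) (fun l => pd k (pd l (pd l h)))).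
  move=> k y hy; rewrite lapE pd_sum //. move=> l; do 2 apply: sm_pd; exact: (sm_mono sh).
have sk : forall k l, sm 1 (pd k (pd l (pd l h))).
  move=> k l; do 3 apply: sm_pd; exact: sh.
rewrite (pd_local _ (e j)) // (pd_local _ (e i)) // !pd_sum //.
apply: eq_bigr => l _.
have := hs l i j.
by move=> ->.
Qed.

End Ops2.

Section Schwarz.
Variables (m : nat).
Implicit Types (i j k : 'I_m) (x y : point m).

Lemma upd_eq y k a : upd y k a k = a.
Proof. by rewrite /upd eqxx. Qed.
Lemma upd_neq y k l a : l != k -> upd y k a l = y l.
Proof. by rewrite /upd => /negPf ->. Qed.
Lemma upd_upd_same y k a b : upd (upd y k a) k b = upd y k b.
Proof. apply: functional_extensionality => l; rewrite /upd; by case: (l == k). Qed.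
Lemma upd_comm y k l a b : k != l -> upd (upd y k a) l b = upd (upd y l b) k a.
Proof.
move=> hkl; apply: functional_extensionality => z; rewrite /upd.
case: (eqVneq z l) => [->|hzl]; first by rewrite eq_sym (negPf hkl).
by case: (z == k).
Qed.

Lemma shift_deriv (phi : R -> R) c t l :
  derivable_pt_lim phi (c + t) l -> derivable_pt_lim (fun s => phi (c + s)) t l.
Proof.
move=> H.
have h1 : derivable_pt_lim (fun s => c + s) t 1.
  have := derivable_pt_lim_plus _ _ t _ _ (derivable_pt_lim_const c t) (derivable_pt_lim_id t).
  rewrite Rplus_0_l. apply: derivable_pt_lim_ext => z. by rewrite /plus_fct /fct_cte.
have := derivable_pt_lim_comp _ _ _ _ _ h1 H. rewrite Rmult_1_r.
apply: derivable_pt_lim_ext => z. done.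
Qed.

Definition PP x i j s t := upd (upd x i (x i + s)) j (x j + t).

Lemma MV2 (Om : point m -> Prop) (u ui uji : point m -> R) x i j h :
  i != j -> 0 < h ->
  (forall s t, 0 <= s <= h -> 0 <= t <= h -> Om (PP x i j s t)) ->
  (forall y, Om y -> derivable_pt_lim (fun tau => u (upd y i tau)) (y i) (ui y)) ->
  (forall y, Om y -> derivable_pt_lim (fun tau => ui (upd y j tau)) (y j) (uji y)) ->
  exists s t, 0 < s < h /\ 0 < t < h /\
    u (PP x i j h h) - u (PP x i j h 0) - u (PP x i j 0 h) + u (PP x i j 0 0)
    = h * h * uji (PP x i j s t).
Proof.
move=> hij hh HOm Hi Hj.
have ePP : forall s t, PP x i j s t = upd (upd x j (x j + t)) i (x i + s).
  by move=> s t; rewrite /PP upd_comm.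
have PPi : forall s t, PP x i j s t i = x i + s.
  move=> s t; rewrite ePP upd_eq //.
have PPj : forall s t, PP x i j s t j = x j + t.
  move=> s t; rewrite /PP upd_eq //.
pose a s := u (PP x i j s h) - u (PP x i j s 0).
pose a' s := ui (PP x i j s h) - ui (PP x i j s 0).
have Da : forall s, 0 <= s <= h -> derivable_pt_lim a s (a' s).
  move=> s hs.
  have D1 : forall t, 0 <= t <= h -> derivable_pt_lim (fun s0 => u (PP x i j s0 t)) s (ui (PP x i j s t)).
    move=> t ht.
    have := Hi _ (HOm s t hs ht). rewrite PPi => H.
    have H2 := shift_deriv H.
    apply: derivable_pt_lim_ext H2 => z. by rewrite (ePP s t) upd_upd_same ePP.
  have := derivable_pt_lim_minus _ _ _ _ _ (D1 h (conj (Rlt_le _ _ hh) (Rle_refl _))) (D1 0 (conj (Rle_refl 0) (Rlt_le _ _ hh))).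
  apply: derivable_pt_lim_ext => z. by rewrite /minus_fct /a.
have [s1 [Es1 Hs1]] := MVT_cor2 a a' 0 h hh Da.
have hs1 : 0 <= s1 <= h by lra.
pose b t := ui (PP x i j s1 t).
have Db : forall t, 0 <= t <= h -> derivable_pt_lim b t (uji (PP x i j s1 t)).
  move=> t ht.
  have := Hj _ (HOm s1 t hs1 ht). rewrite PPj => H.
  have H2 := shift_deriv H.
  apply: derivable_pt_lim_ext H2 => z. by rewrite /b /PP upd_upd_same.
have [t1 [Et1 Ht1]] := MVT_cor2 b (fun t => uji (PP x i j s1 t)) 0 h hh Db.
exists s1, t1; split => //; split => //.
have : a h - a 0 = h * h * uji (PP x i j s1 t1).
  rewrite Es1 /a' -/(b h) -/(b 0) Et1. ring.
rewrite /a. lra.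
Qed.


Lemma PP_swap x i j s t : i != j -> PP x j i t s = PP x i j s t.
Proof. move=> hij; rewrite /PP upd_comm //; by rewrite eq_sym. Qed.

Lemma PP_dist x i j s t h l : 0 <= s <= h -> 0 <= t <= h -> Rabs (PP x i j s t l - x l) <= h.
Proof.
move=> hs ht; rewrite /PP /upd.
case: eqP => [->|_]; first by rewrite Rabs_right; lra.
case: eqP => [->|_]; first by rewrite Rabs_right; lra.
rewrite Rminus_diag Rabs_R0; lra.
Qed.

Lemma schwarz (Om : point m -> Prop) (HO : open_Rm Om) (h : point m -> Cl m) x i j C :
  Om x -> sm Om 2 h ->
  cont_at_Rm (fun y => pd j (pd i h) y C) x -> cont_at_Rm (fun y => pd i (pd j h) y C) x ->
  pd j (pd i h) x C = pd i (pd j h) x C.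
Proof.
move=> hx sh c1 c2.
case: (eqVneq i j) => [->|hij] //.
set v1 := pd j (pd i h) x C. set v2 := pd i (pd j h) x C.
case: (Req_dec v1 v2) => // hne. exfalso.
have he : 0 < Rabs (v1 - v2) / 2.
  have : 0 < Rabs (v1 - v2) by apply: Rabs_pos_lt; lra. lra.
set e := Rabs (v1 - v2) / 2 in he.
case: (HO x hx) => r [hr Hr].
case: (c1 e he) => d1 [hd1 Hd1].
case: (c2 e he) => d2 [hd2 Hd2].
set h0 := Rmin (Rmin d1 d2) r / 2.
have hm1 : Rmin (Rmin d1 d2) r <= d1 by apply: Rle_trans (Rmin_l _ _) (Rmin_l _ _).
have hm2 : Rmin (Rmin d1 d2) r <= d2 by apply: Rle_trans (Rmin_l _ _) (Rmin_r _ _).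
have hm3 : Rmin (Rmin d1 d2) r <= r by apply: Rmin_r.
have hm0 : 0 < Rmin (Rmin d1 d2) r by apply: Rmin_pos; [apply: Rmin_pos|].
have hh0 : 0 < h0 by rewrite /h0; lra.
have Hin : forall a b, 0 <= a <= h0 -> 0 <= b <= h0 -> forall l, Rabs (PP x i j a b l - x l) <= h0.
  by move=> a b ha hb l; apply: PP_dist.
have HOm : forall a b, 0 <= a <= h0 -> 0 <= b <= h0 -> Om (PP x i j a b).
  move=> a b ha hb; apply: Hr => l; have := Hin a b ha hb l; rewrite /h0; lra.
have HOm' : forall a b, 0 <= a <= h0 -> 0 <= b <= h0 -> Om (PP x j i a b).
  move=> a b ha hb; rewrite PP_swap //; exact: HOm.
have [s1 [t1 [hs1 [ht1 E1]]]] := MV2 (u := fun y => h y C) (ui := fun y => pd i h y C)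
  (uji := fun y => pd j (pd i h) y C) hij hh0 HOm
  (fun y hy => sh.1 i y C hy) (fun y hy => (sh.2 i).1 j y C hy).
have hji : j != i by rewrite eq_sym.
have [s2 [t2 [hs2 [ht2 E2]]]] := MV2 (u := fun y => h y C) (ui := fun y => pd j h y C)
  (uji := fun y => pd i (pd j h) y C) hji hh0 HOm'
  (fun y hy => sh.1 j y C hy) (fun y hy => (sh.2 j).1 i y C hy).
rewrite (@PP_swap x i j h0 h0 hij) (@PP_swap x i j 0 h0 hij) (@PP_swap x i j h0 0 hij) (@PP_swap x i j 0 0 hij) in E2.
have Eq : pd j (pd i h) (PP x i j s1 t1) C = pd i (pd j h) (PP x j i s2 t2) C.
  have hq : h0 * h0 <> 0 by apply: Rmult_integral_contrapositive; lra.
  apply: (Rmult_eq_reg_l (h0 * h0)) => //. rewrite -E1 -E2 /=. ring.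
have A1 : Rabs (pd j (pd i h) (PP x i j s1 t1) C - v1) < e.
  apply: Hd1 => l. have := Hin s1 t1 (conj (Rlt_le _ _ (proj1 hs1)) (Rlt_le _ _ (proj2 hs1)))
     (conj (Rlt_le _ _ (proj1 ht1)) (Rlt_le _ _ (proj2 ht1))) l. rewrite /h0; lra.
have A2 : Rabs (pd i (pd j h) (PP x j i s2 t2) C - v2) < e.
  apply: Hd2 => l. rewrite PP_swap //.
  have := Hin t2 s2 (conj (Rlt_le _ _ (proj1 ht2)) (Rlt_le _ _ (proj2 ht2)))
     (conj (Rlt_le _ _ (proj1 hs2)) (Rlt_le _ _ (proj2 hs2))) l. rewrite /h0; lra.
rewrite Eq in A1.
have : Rabs (v1 - v2) < 2 * e.
  have -> : v1 - v2 = (pd i (pd j h) (PP x j i s2 t2) C - v2) - (pd i (pd j h) (PP x j i s2 t2) C - v1) by ring.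
  apply: Rle_lt_trans (Rabs_triang _ _) _. rewrite Rabs_Ropp. lra.
rewrite /e; lra.
Qed.

End Schwarz.

Section Main.
Variables (m : nat) (Hm : odd m) (Om : point m -> Prop) (HO : open_Rm Om)
  (f : point m -> Cl m) (Hf : Ck 4 Om f).
Local Notation F := (point m -> Cl m).
Local Notation eqOn := (eqOn Om).
Local Notation sm := (sm Om).
Local Notation DL := diracL.
Local Notation DR := diracR.
Local Notation Z := (@Fzero m).
Implicit Types (g h : F) (i j k : 'I_m) (x : point m) (a b : Cl m).
Local Notation sm_FR := (sm_FR HO).
Local Notation sm_FL := (sm_FL HO).
Local Notation sm_FT := (sm_FT HO).
Local Notation sm_add := (sm_add HO).
Local Notation sm_scal := (sm_scal HO).
Local Notation sm_Xr := (sm_Xr HO).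
Local Notation sm_Xl := (sm_Xl HO).
Local Notation sm_DL := (sm_DL HO).
Local Notation sm_DR := (sm_DR HO).
Local Notation sm_lap := (sm_lap HO).
Local Notation pd_local := (pd_local HO).

Lemma sm_pds n l : (size l + n <= 4)%N -> sm n (pds l f).
Proof.
elim: n l => [|n IH] l hl //=; split.
- move=> j x C hx. apply: (Hf.1 l j C x) => //. apply: leq_trans hl. by rewrite addnS ltnS leq_addr.
- move=> j. apply: (IH (j :: l)). by rewrite /= addSn -addnS.
Qed.

Lemma smf : sm 4 f. Proof. exact: (sm_pds (l := [::])). Qed.
Lemma smf3 : sm 3 f. Proof. exact: sm_mono smf. Qed.
Lemma smf2 : sm 2 f. Proof. exact: sm_mono smf3. Qed.
Lemma smf1 : sm 1 f. Proof. exact: sm_mono smf2. Qed.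

Lemma contf l C x : (size l <= 4)%N -> Om x -> cont_at_Rm (fun y => pds l f y C) x.
Proof. move=> hl hx; exact: (Hf.2 l C x hl hx). Qed.

Lemma symf x : Om x -> sym2 f x.
Proof.
move=> hx i j; apply: functional_extensionality => C.
apply: (schwarz HO (h := f) (i := j) (j := i)) => //; first exact: smf2.
- exact: (contf (l := [:: i; j])).
- exact: (contf (l := [:: j; i])).
Qed.

Lemma sympd k x : Om x -> sym2 (pd k f) x.
Proof.
move=> hx i j; apply: functional_extensionality => C.
apply: (schwarz HO (h := pd k f) (i := j) (j := i)) => //; first exact: (sm_pds (l := [:: k])).
- exact: (contf (l := [:: i; j; k])).
- exact: (contf (l := [:: j; i; k])).
Qed.

Lemma sympdpd k x : Om x -> sym2 (pd k (pd k f)) x.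
Proof.
move=> hx i j; apply: functional_extensionality => C.
apply: (schwarz HO (h := pd k (pd k f)) (i := j) (j := i)) => //; first exact: (sm_pds (l := [:: k; k])).
- exact: (contf (l := [:: i; j; k; k])).
- exact: (contf (l := [:: j; i; k; k])).
Qed.

Lemma symDL x : Om x -> sym2 (DL f) x.
Proof. move=> hx; apply: (sym2_DL HO) => //; [exact: smf3 | move=> k; exact: sympd]. Qed.
Lemma symDR x : Om x -> sym2 (DR f) x.
Proof. move=> hx; apply: (sym2_DR HO) => //; [exact: smf3 | move=> k; exact: sympd]. Qed.
Lemma symlap x : Om x -> sym2 (lap f) x.
Proof. move=> hx; apply: (sym2_lap HO) => //; [exact: smf | move=> k; exact: sympdpd]. Qed.


Local Notation DL_local := (DL_local HO).
Local Notation DR_local := (DR_local HO).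
Local Notation lap_local := (lap_local HO).
Local Notation lap_add := (lap_add HO).
Local Notation lap_scal := (lap_scal HO).
Local Notation O1 := (O1 HO).
Local Notation O1' := (O1' HO).
Local Notation O4 := (O4 HO).
Local Notation O5 := (O5 HO).
Local Notation O6 := (O6 HO).
Local Notation O7 := (O7 HO).
Local Notation O8 := (O8 HO).
Local Notation O9 := (O9 HO).
Local Notation DL_zero := (@DL_zero m Om).
Local Notation DR_zero := (@DR_zero m Om).
Local Notation lap_zero := (lap_zero HO).
Local Notation DL_add := (@DL_add m Om).
Local Notation DR_add := (@DR_add m Om).
Local Notation DL_scal := (@DL_scal m Om).
Local Notation DR_scal := (@DR_scal m Om).
Local Notation O2 := (@O2 m Om).
Local Notation O2' := (@O2' m Om).

Lemma smDL1 : sm 3 (DL f). Proof. exact: sm_DL smf. Qed.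
Lemma smDR1 : sm 3 (DR f). Proof. exact: sm_DR smf. Qed.
Lemma smlap : sm 2 (lap f). Proof. exact: sm_lap smf. Qed.
Lemma smDL2 : sm 2 (DL f). Proof. exact: sm_mono smDL1. Qed.
Lemma smDR2 : sm 2 (DR f). Proof. exact: sm_mono smDR1. Qed.
Lemma smlap1 : sm 1 (lap f). Proof. exact: sm_mono smlap. Qed.
Lemma smDRDR1 : sm 1 (DR (DR f)). Proof. exact: sm_DR smDR2. Qed.
Lemma smDLDL1 : sm 1 (DL (DL f)). Proof. exact: sm_DL smDL2. Qed.

Ltac clsolve := apply: functional_extensionality => ?; rewrite /Fzero /cadd /cscal /czero; ring.

Lemma Ei x : Om x -> DL (DL (DL (Xr f))) x =
  cadd (cadd (Xr (DL (DL (DL f))) x) (FT (DL (DL f)) x)) (cscal (-2) (DL (DR f) x)).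
Proof.
move=> hx.
have s1 : sm 1 (DL f) by exact: (sm_mono smDL2).
have s2 : sm 1 (DL (DL f)) by exact: (sm_mono_le _ (sm_DL smDL1)).
have b : eqOn (DL (DL (Xr f))) (Fadd (Xr (DL (DL f))) (Fscal (-2) (DR f))).
  move=> y hy. rewrite (DL_local (O1 smf1)) // DL_add //; last 2 first.
    exact: sm_Xr. exact: sm_FT smf1.
  rewrite /Fadd (O1 s1) // /Fadd -(O2 smf1 hy) /Fadd. clsolve.
rewrite (DL_local b) // DL_add //; last 2 first.
  exact: sm_Xr. apply: sm_scal; exact: (sm_mono_le _ (sm_DR smf2)).
rewrite /Fadd (O1 s2) // DL_scal //. exact: (sm_mono_le _ (sm_DR smf2)).
Qed.

Lemma Eii x : Om x -> DR (DR (DR (Xl f))) x =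
  cadd (cadd (Xl (DR (DR (DR f))) x) (FT (DR (DR f)) x)) (cscal (-2) (DR (DL f) x)).
Proof.
move=> hx.
have s1 : sm 1 (DR f) by exact: (sm_mono smDR2).
have s2 : sm 1 (DR (DR f)) by exact: (sm_mono_le _ (sm_DR smDR1)).
have b : eqOn (DR (DR (Xl f))) (Fadd (Xl (DR (DR f))) (Fscal (-2) (DL f))).
  move=> y hy. rewrite (DR_local (O1' smf1)) // DR_add //; last 2 first.
    exact: sm_Xl. exact: sm_FT smf1.
  rewrite /Fadd (O1' s1) // /Fadd -(O2' smf1 hy) /Fadd. clsolve.
rewrite (DR_local b) // DR_add //; last 2 first.
  exact: sm_Xl. apply: sm_scal; exact: (sm_mono_le _ (sm_DL smf2)).
rewrite /Fadd (O1' s2) // DR_scal //. exact: (sm_mono_le _ (sm_DL smf2)).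
Qed.


Lemma infraE x : Om x ->
  (fun C => \big[Rplus/0]_(i : 'I_m) \big[Rplus/0]_(j : 'I_m)
       clmul (clmul (gen i) (pd i (pd j f) x)) (gen j) C) = DL (DR f) x.
Proof.
move=> hx; rewrite DLx.
rewrite (eq_bigr (fun i => \big[@cadd m/czero m]_(j : 'I_m) Rm j (Lm i (pd i (pd j f) x)))); last first.
  move=> i _; rewrite (pd_DR HO) // ?Lm_sum; last exact: smf2.
  apply: eq_bigr => j _; exact: LRc.
apply: functional_extensionality => C; rewrite csumE; apply: eq_bigr => i _; by rewrite csumE.
Qed.

Lemma clzeroE (a : Cl m) : clzero a <-> a = czero m.
Proof.
split => [h|->]; last by [].
apply: functional_extensionality => C; exact: h.
Qed.

Lemma clzero_scal r (a : Cl m) : r <> 0 -> (clzero (cscal r a) <-> clzero a).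
Proof.
move=> hr; split => h C; last by rewrite /cscal h; ring.
have := h C; rewrite /cscal => h1. case: (Rmult_integral _ _ h1) => //.
Qed.

Lemma infra_iff : inframonogenic Om f <-> eqOn (DL (DR f)) Z.
Proof.
split => h x hx.
- have := h x hx; rewrite (infraE hx) => /clzeroE. done.
- rewrite (infraE hx); apply/clzeroE; exact: h.
Qed.

Lemma harm_iff : harmonic Om f <-> eqOn (lap f) Z.
Proof.
split => h x hx.
- exact/clzeroE/h.
- apply/clzeroE; exact: h.
Qed.

Section Harm.
Hypothesis H : eqOn (lap f) Z.

Lemma hDL2 : eqOn (DL (DL f)) Z.
Proof. move=> x hx; rewrite (O4 hx smf2 (symf hx)) H //. clsolve. Qed.
Lemma hDR2 : eqOn (DR (DR f)) Z.
Proof. move=> x hx; rewrite (O5 hx smf2 (symf hx)) H //. clsolve. Qed.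
Lemma hDL3 : eqOn (DL (DL (DL f))) Z.
Proof. move=> x hx; rewrite (DL_local hDL2) //; exact: DL_zero. Qed.
Lemma hDR3 : eqOn (DR (DR (DR f))) Z.
Proof. move=> x hx; rewrite (DR_local hDR2) //; exact: DR_zero. Qed.

Lemma h_i x : Om x -> DL (DL (DL (Xr f))) x = cscal (-2) (DL (DR f) x).
Proof.
move=> hx; rewrite (Ei hx) Xrx /FT hDL3 // hDL2 // XrC_zero Tm_zero. clsolve.
Qed.
Lemma h_ii x : Om x -> DR (DR (DR (Xl f))) x = cscal (-2) (DL (DR f) x).
Proof.
move=> hx; rewrite (Eii hx) Xlx /FT hDR3 // hDR2 // XlC_zero Tm_zero.
rewrite (O6 hx smf2 (symf hx)). clsolve.
Qed.
End Harm.

Section Infra.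
Hypothesis I : eqOn (DL (DR f)) Z.

Lemma iK3 : eqOn (DR (DL f)) Z.
Proof. move=> x hx; rewrite -(O6 hx smf2 (symf hx)); exact: I. Qed.

Lemma lap_as_DR x : Om x -> lap f x = cscal (-1) (DR (DR f) x).
Proof. move=> hx; rewrite (O5 hx smf2 (symf hx)). clsolve. Qed.
Lemma lap_as_DL x : Om x -> lap f x = cscal (-1) (DL (DL f) x).
Proof. move=> hx; rewrite (O4 hx smf2 (symf hx)). clsolve. Qed.

Lemma iDLlap : eqOn (DL (lap f)) Z.
Proof.
move=> x hx.
have e : eqOn (lap f) (Fscal (-1) (DR (DR f))) by move=> y hy; rewrite lap_as_DR.
rewrite (DL_local e) // DL_scal //; last exact: smDRDR1.
rewrite /Fscal (O6 hx smDR2 (symDR hx)) (DR_local I) // DR_zero //. clsolve.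
Qed.

Lemma iDRlap : eqOn (DR (lap f)) Z.
Proof.
move=> x hx.
have e : eqOn (lap f) (Fscal (-1) (DL (DL f))) by move=> y hy; rewrite lap_as_DL.
rewrite (DR_local e) // DR_scal //; last exact: smDLDL1.
rewrite /Fscal -(O6 hx smDL2 (symDL hx)) (DL_local iK3) // DL_zero //. clsolve.
Qed.

Lemma iDL3 : eqOn (DL (DL (DL f))) Z.
Proof.
move=> x hx.
have e : eqOn (DL (DL f)) (Fscal (-1) (lap f)) by move=> y hy; rewrite (O4 hy smf2 (symf hy)).
rewrite (DL_local e) // DL_scal //; last exact: smlap1.
rewrite /Fscal iDLlap //. clsolve.
Qed.

Lemma iDR3 : eqOn (DR (DR (DR f))) Z.
Proof.
move=> x hx.
have e : eqOn (DR (DR f)) (Fscal (-1) (lap f)) by move=> y hy; rewrite (O5 hy smf2 (symf hy)).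
rewrite (DR_local e) // DR_scal //; last exact: smlap1.
rewrite /Fscal iDRlap //. clsolve.
Qed.

Lemma i_i x : Om x -> DL (DL (DL (Xr f))) x = cscal (-1) (Tm (lap f x)).
Proof.
move=> hx; rewrite (Ei hx) Xrx /FT iDL3 // I // XrC_zero (O4 hx smf2 (symf hx)) Tm_scal. clsolve.
Qed.
Lemma i_ii x : Om x -> DR (DR (DR (Xl f))) x = cscal (-1) (Tm (lap f x)).
Proof.
move=> hx; rewrite (Eii hx) Xlx /FT iDR3 // iK3 // XlC_zero (O5 hx smf2 (symf hx)) Tm_scal. clsolve.
Qed.
End Infra.

Lemma G g : sm 2 g -> eqOn (lap (Xr (Xl g)))
  (Fadd (Fadd (Fadd (Xr (Xl (lap g))) (Fscal 2 (Xr (DL g)))) (Fscal 2 (Xl (DR g)))) (Fscal 2 (FT g))).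
Proof.
move=> sg y hy.
have s2 : sm 2 (Xl g) by exact: sm_Xl.
rewrite (O7 s2 hy) /Fadd /Fscal !Xrx (O8 sg hy) /Fadd /Fscal (O1' (sm_mono sg) hy) /Fadd /FT.
rewrite XrC_add XrC_scal !Xlx. clsolve.
Qed.

Lemma E3 x : Om x -> lap (lap (Xr (Xl f))) x =
  cadd (cadd (cadd
   (cadd (cadd (cadd (Xr (Xl (lap (lap f))) x) (cscal 2 (Xr (DL (lap f)) x))) (cscal 2 (Xl (DR (lap f)) x))) (cscal 2 (FT (lap f) x)))
   (cscal 2 (cadd (Xr (lap (DL f)) x) (cscal 2 (DR (DL f) x)))))
   (cscal 2 (cadd (Xl (lap (DR f)) x) (cscal 2 (DL (DR f) x)))))
   (cscal 2 (FT (lap f) x)).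
Proof.
move=> hx.
have sA : sm 2 (Xr (Xl (lap f))) by apply: sm_Xr; apply: sm_Xl; exact: smlap.
have sB : sm 2 (Fscal 2 (Xr (DL f))) by apply: sm_scal; apply: sm_Xr; exact: smDL2.
have sC : sm 2 (Fscal 2 (Xl (DR f))) by apply: sm_scal; apply: sm_Xl; exact: smDR2.
have sD : sm 2 (Fscal 2 (FT f)) by apply: sm_scal; apply: sm_FT; exact: smf2.
have sAB : sm 2 (Fadd (Xr (Xl (lap f))) (Fscal 2 (Xr (DL f)))) by exact: sm_add.
have sABC : sm 2 (Fadd (Fadd (Xr (Xl (lap f))) (Fscal 2 (Xr (DL f)))) (Fscal 2 (Xl (DR f)))) by exact: sm_add.
rewrite (lap_local (G smf2)) // lap_add // /Fadd lap_add // /Fadd lap_add // /Fadd.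
rewrite (G smlap hx) /Fadd /Fscal.
rewrite lap_scal //; last by apply: sm_Xr; exact: smDL2.
rewrite lap_scal //; last by apply: sm_Xl; exact: smDR2.
rewrite lap_scal //; last by apply: sm_FT; exact: smf2.
rewrite /Fscal (O7 smDL2 hx) (O8 smDR2 hx) (O9 smf2 hx) /Fadd /Fscal.
done.
Qed.

Lemma neg_zero a : cscal (-1) a = czero m -> a = czero m.
Proof.
move=> h; apply: functional_extensionality => C.
have := f_equal (fun z => z C) h; rewrite /cscal /czero => h1. lra.
Qed.

Lemma h_iii (H : eqOn (lap f) Z) x : Om x -> lap (lap (Xr (Xl f))) x = cscal 8 (DL (DR f) x).
Proof.
move=> hx; rewrite (E3 hx).
have e1 : lap (lap f) x = czero m by rewrite (lap_local H) // lap_zero.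
have e2 : DL (lap f) x = czero m by rewrite (DL_local H) // DL_zero.
have e3 : DR (lap f) x = czero m by rewrite (DR_local H) // DR_zero.
have e4 : FT (lap f) x = czero m by rewrite /FT H // Tm_zero.
have e5 : lap (DL f) x = czero m.
  apply: neg_zero. rewrite -(O4 hx smDL2 (symDL hx)). exact: hDL3.
have e6 : lap (DR f) x = czero m.
  apply: neg_zero. rewrite -(O5 hx smDR2 (symDR hx)). exact: hDR3.
rewrite !Xrx !Xlx e1 e2 e3 e4 e5 e6 ?XlC_zero ?XrC_zero ?XlC_zero.
rewrite -(O6 hx smf2 (symf hx)). clsolve.
Qed.

Lemma i_iii (I : eqOn (DL (DR f)) Z) x : Om x -> lap (lap (Xr (Xl f))) x = cscal 4 (Tm (lap f x)).
Proof.
move=> hx; rewrite (E3 hx).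
have e1 : lap (lap f) x = czero m.
  apply: neg_zero. rewrite -(O4 hx smlap (symlap hx)) (DL_local (iDLlap I)) // DL_zero //.
have e2 : DL (lap f) x = czero m by exact: iDLlap.
have e3 : DR (lap f) x = czero m by exact: iDRlap.
have e5 : lap (DL f) x = czero m.
  apply: neg_zero. rewrite -(O4 hx smDL2 (symDL hx)). exact: iDL3.
have e6 : lap (DR f) x = czero m.
  apply: neg_zero. rewrite -(O5 hx smDR2 (symDR hx)). exact: iDR3.
have e7 : DR (DL f) x = czero m by exact: iK3.
have e8 : DL (DR f) x = czero m by exact: I.
rewrite !Xrx !Xlx e1 e2 e3 e5 e6 e7 e8 ?XlC_zero ?XrC_zero ?XlC_zero /FT. clsolve.
Qed.

Lemma Tm_zero_iff x : clzero (Tm (lap f x)) <-> clzero (lap f x).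
Proof.
split => h.
- exact: (Tm_inj Hm h).
- move/clzeroE: h => ->; rewrite Tm_zero. by [].
Qed.

Lemma main_sec :
  (harmonic Om f ->
     (inframonogenic Om f <-> cond_i Om f) /\
     (inframonogenic Om f <-> cond_ii Om f) /\
     (inframonogenic Om f <-> cond_iii Om f)) /\
  (inframonogenic Om f ->
     (harmonic Om f <-> cond_i Om f) /\
     (harmonic Om f <-> cond_ii Om f) /\
     (harmonic Om f <-> cond_iii Om f)).
Proof.
have e2 : (-2) <> 0 by lra.
have e8 : 8 <> 0 by lra.
have e4 : 4 <> 0 by lra.
have e1 : (-1) <> 0 by lra.
rewrite /cond_i /cond_ii /cond_iii /vanishes_on.
change (f_x f) with (Xr f). change (x_f f) with (Xl f). change (x_f_x f) with (Xr (Xl f)).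
split.
- move/harm_iff => H. rewrite infra_iff.
  split; [|split]; split => h x hx.
  + rewrite (h_i H hx); apply/(clzero_scal _ e2); apply/clzeroE; exact: h.
  + have := h x hx; rewrite (h_i H hx) => /(clzero_scal _ e2) /clzeroE. done.
  + rewrite (h_ii H hx); apply/(clzero_scal _ e2); apply/clzeroE; exact: h.
  + have := h x hx; rewrite (h_ii H hx) => /(clzero_scal _ e2) /clzeroE. done.
  + rewrite (h_iii H hx); apply/(clzero_scal _ e8); apply/clzeroE; exact: h.
  + have := h x hx; rewrite (h_iii H hx) => /(clzero_scal _ e8) /clzeroE. done.
- move/infra_iff => I. rewrite harm_iff.
  split; [|split]; split => h x hx.
  + rewrite (i_i I hx); apply/(clzero_scal _ e1); apply/Tm_zero_iff/clzeroE; exact: h.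
  + have := h x hx; rewrite (i_i I hx) => /(clzero_scal _ e1) /Tm_zero_iff /clzeroE. done.
  + rewrite (i_ii I hx); apply/(clzero_scal _ e1); apply/Tm_zero_iff/clzeroE; exact: h.
  + have := h x hx; rewrite (i_ii I hx) => /(clzero_scal _ e1) /Tm_zero_iff /clzeroE. done.
  + rewrite (i_iii I hx); apply/(clzero_scal _ e4); apply/Tm_zero_iff/clzeroE; exact: h.
  + have := h x hx; rewrite (i_iii I hx) => /(clzero_scal _ e4) /Tm_zero_iff /clzeroE. done.
Qed.

End Main.


Local Close Scope R_scope.

Theorem mainTheorem11 (m : nat) (Hm : odd m) (Om : point m -> Prop)
  (f : point m -> Cl m) (HO : open_Rm Om) (Hf : Ck 4 Om f) :
  (harmonic Om f ->
     (inframonogenic Om f <-> cond_i Om f) /\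
     (inframonogenic Om f <-> cond_ii Om f) /\
     (inframonogenic Om f <-> cond_iii Om f)) /\
  (inframonogenic Om f ->
     (harmonic Om f <-> cond_i Om f) /\
     (harmonic Om f <-> cond_ii Om f) /\
     (harmonic Om f <-> cond_iii Om f)).
Proof.
exact: (main_sec Hm HO Hf).
Qed.
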